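(* Let $u^1,u^2\in\mathcal U_2$ and $u:=u^1\oplus_cu^2$. Then $u\in\mathcal U_2$ and, with $f=f(t,c,x)\in(0,c)$ the function determined by $u_c(t,c,x)=u^1_c(t,f,x)=u^2_c(t,c-f,x)$, $$\frac{u_c}{u_{cc}}(t,c,x)=\frac{u^1_c}{u^1_{cc}}(t,f,x)+\frac{u^2_c}{u^2_{cc}}(t,c-f,x),\qquad \frac{u_{cx^i}}{u_{cc}}(t,c,x)=\frac{u^1_{cx^i}}{u^1_{cc}}(t,f,x)+\frac{u^2_{cx^i}}{u^2_{cc}}(t,c-f,x).$$
   Context: A function on $(0,\infty)$ satisfies the Inada conditions if it is strictly concave, strictly increasing and continuously differentiable on $(0,\infty)$ with derivative tending to $\infty$ at $0$ and to $0$ at $\infty$. $\mathcal U_1$ is the family of measurable real functions $u=u(t,c,x)$ on $[0,1]\times(0,\infty)\times\mathbb R^d$ such that $u(t,\cdot,x)$ satisfies the Inada conditions for each $(t,x)$ and, for some $N=N(u)>0$, $|u(t,e^y,x)|\le e^{N(1+|x|+|y|)}$ for all $(t,x,y)$. $\mathcal U_2$ is the family of $u\in\mathcal U_1$ such that $u_{cc}$ and $u_{cx^i}$ ($i=1,\dots,d$) exist and are continuous in $(c,x)$, $u_{cc}<0$, and for some $N>0$, $-cu_{cc}/u_c+|u_{cx^i}|/u_c\le N$ on $[0,1]\times(0,\infty)\times\mathbb R^d$. The sup-convolution is $(u^1\oplus_cu^2)(t,c,x):=\sup\{u^1(t,c_1,x)+u^2(t,c_2,x):c_1,c_2>0,\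 c_1+c_2=c\}$. *)

(* Defs.v *)
From Stdlib Require Import Reals Lra.
From mathcomp Require Import ssreflect ssrbool eqtype ssrnat seq fintype.
Open Scope R_scope.

Section Defs.
Variable d : nat.

Definition vec := 'I_d -> R.

Definition vnorm (x : vec) : R :=
  sqrt (foldr (fun i acc => (x i) ^ 2 + acc) 0 (enum 'I_d)).

Definition vupd (x : vec) (i : 'I_d) (h : R) : vec :=
  fun j => if j == i then h else x j.

Definition fun3 := R -> R -> vec -> R.

Definition dom (t c : R) (x : vec) : Prop := 0 <= t <= 1 /\ 0 < c.

Definition Pt := (R * R * vec)%type.

Definition close (p q : Pt) (e : R) : Prop :=
  Rabs (fst (fst p) - fst (fst q)) < e /\
  Rabs (snd (fst p) - snd (fst q)) < e /\
  forall i, Rabs (snd p i - snd q i) < e.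

Definition open_Pt (A : Pt -> Prop) : Prop :=
  forall p, A p -> exists e, 0 < e /\ forall q, close p q e -> A q.

Definition sigma_algebra (F : (Pt -> Prop) -> Prop) : Prop :=
  F (fun _ => True) /\
  (forall A, F A -> F (fun p => ~ A p)) /\
  (forall An : nat -> Pt -> Prop, (forall n, F (An n)) ->
      F (fun p => exists n, An n p)).

Definition borel (A : Pt -> Prop) : Prop :=
  forall F, sigma_algebra F -> (forall O, open_Pt O -> F O) -> F A.

Definition open_R (V : R -> Prop) : Prop :=
  forall y, V y -> exists e, 0 < e /\ forall z, Rabs (z - y) < e -> V z.

Definition measurable3 (u : fun3) : Prop :=
  forall V, open_R V ->
    borel (fun p => dom (fst (fst p)) (snd (fst p)) (snd p) /\
                    V (u (fst (fst p)) (snd (fst p)) (snd p))).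

Definition Inada (g : R -> R) : Prop :=
  (forall a b l, 0 < a -> 0 < b -> a <> b -> 0 < l < 1 ->
      l * g a + (1 - l) * g b < g (l * a + (1 - l) * b)) /\
  (forall a b, 0 < a -> a < b -> g a < g b) /\
  exists g' : R -> R,
    (forall c, 0 < c -> derivable_pt_lim g c (g' c)) /\
    (forall c, 0 < c -> continuity_pt g' c) /\
    (forall M, exists e, 0 < e /\ forall c, 0 < c < e -> M < g' c) /\
    (forall e, 0 < e -> exists M, forall c, M < c -> Rabs (g' c) < e).

Definition U1 (u : fun3) : Prop :=
  measurable3 u /\
  (forall t x, 0 <= t <= 1 -> Inada (fun c => u t c x)) /\
  exists N, 0 < N /\
    forall t x y, 0 <= t <= 1 ->
      Rabs (u t (exp y) x) <= exp (N * (1 + vnorm x + Rabs y)).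

Definition is_dc (u uc : fun3) : Prop :=
  forall t c x, dom t c x -> derivable_pt_lim (fun c' => u t c' x) c (uc t c x).

Definition is_dx (u : fun3) (i : 'I_d) (ux : fun3) : Prop :=
  forall t c x, dom t c x ->
    derivable_pt_lim (fun h => u t c (vupd x i h)) (x i) (ux t c x).

Definition cont_cx (g : fun3) : Prop :=
  forall t c x, dom t c x -> forall e, 0 < e -> exists del, 0 < del /\
    forall c' x', 0 < c' -> Rabs (c' - c) < del ->
      (forall j, Rabs (x' j - x j) < del) ->
      Rabs (g t c' x' - g t c x) < e.

Definition U2 (u : fun3) : Prop :=
  U1 u /\
  exists (uc ucc : fun3) (ucx : 'I_d -> fun3),
    is_dc u uc /\ is_dc uc ucc /\ (forall i, is_dx uc i (ucx i)) /\
    cont_cx ucc /\ (forall i, cont_cx (ucx i)) /\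
    (forall t c x, dom t c x -> ucc t c x < 0) /\
    exists N, 0 < N /\
      forall t c x i, dom t c x ->
        - c * ucc t c x / uc t c x + Rabs (ucx i t c x) / uc t c x <= N.

Definition is_supconv (u1 u2 u : fun3) : Prop :=
  forall t c x, dom t c x ->
    is_lub (fun v => exists c1, 0 < c1 < c /\ v = u1 t c1 x + u2 t (c - c1) x)
           (u t c x).

End Defs.

(* Main.v *)
Require Import Defs.
From Stdlib Require Import Reals Lra Lia ZArith ClassicalEpsilon FunctionalExtensionality PropExtensionality Classical.
From mathcomp Require ssreflect ssrbool eqtype ssrnat seq fintype.
Open Scope R_scope.

Section Conv.
Variable X : Type.
Variable N : R -> X -> Prop.
Hypothesis Nmono : forall d1 d2 p, 0 < d1 -> d1 <= d2 -> N d1 p -> N d2 p.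

Definition conv (g : X -> R) (l : R) :=
  forall e, 0 < e -> exists d, 0 < d /\ forall p, N d p -> Rabs (g p - l) < e.

Lemma conv_const a : conv (fun _ => a) a.
Proof. intros e He. exists 1. split. lra. intros p _. unfold Rminus. rewrite Rplus_opp_r, Rabs_R0. lra. Qed.

Lemma N_min d1 d2 p : 0 < d1 -> 0 < d2 -> N (Rmin d1 d2) p -> N d1 p /\ N d2 p.
Proof.
  intros h1 h2 h. assert (0 < Rmin d1 d2) by (apply Rmin_glb_lt; lra).
  split; eapply Nmono; eauto. apply Rmin_l. apply Rmin_r.
Qed.

Lemma conv_plus f g a b : conv f a -> conv g b -> conv (fun p => f p + g p) (a + b).
Proof.
  intros hf hg e He.
  destruct (hf (e/2)) as [d1 [H1 K1]]. lra.
  destruct (hg (e/2)) as [d2 [H2 K2]]. lra.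
  exists (Rmin d1 d2). split. apply Rmin_glb_lt; lra.
  intros p hp. destruct (N_min _ _ _ H1 H2 hp) as [p1 p2].
  specialize (K1 p p1). specialize (K2 p p2).
  replace (f p + g p - (a + b)) with ((f p - a) + (g p - b)) by ring.
  eapply Rle_lt_trans. apply Rabs_triang. lra.
Qed.

Lemma conv_opp f a : conv f a -> conv (fun p => - f p) (- a).
Proof.
  intros hf e He. destruct (hf e He) as [d [H K]]. exists d. split. auto.
  intros p hp. replace (- f p - - a) with (- (f p - a)) by ring. rewrite Rabs_Ropp. auto.
Qed.

Lemma conv_minus f g a b : conv f a -> conv g b -> conv (fun p => f p - g p) (a - b).
Proof. intros. apply (conv_plus f (fun p => - g p) a (- b)); auto. apply conv_opp; auto. Qed.

Lemma conv_mult f g a b : conv f a -> conv g b -> conv (fun p => f p * g p) (a * b).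
Proof.
  intros hf hg e He.
  assert (Ha : 0 <= Rabs a) by apply Rabs_pos.
  assert (Hb : 0 <= Rabs b) by apply Rabs_pos.
  destruct (hf (e / (2 * (Rabs b + 1)))) as [d1 [H1 K1]].
  { apply Rdiv_lt_0_compat; lra. }
  destruct (hg (Rmin 1 (e / (2 * (Rabs a + 1))))) as [d2 [H2 K2]].
  { apply Rmin_glb_lt. lra. apply Rdiv_lt_0_compat; lra. }
  exists (Rmin d1 d2). split. apply Rmin_glb_lt; lra.
  intros p hp. destruct (N_min _ _ _ H1 H2 hp) as [p1 p2].
  specialize (K1 p p1). specialize (K2 p p2).
  assert (K2a : Rabs (g p - b) < 1) by (eapply Rlt_le_trans; [exact K2| apply Rmin_l]).
  assert (K2b : Rabs (g p - b) < e / (2 * (Rabs a + 1))) by (eapply Rlt_le_trans; [exact K2| apply Rmin_r]).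
  assert (Hg : Rabs (g p) <= Rabs b + 1).
  { replace (g p) with ((g p - b) + b) by ring. eapply Rle_trans. apply Rabs_triang. lra. }
  replace (f p * g p - a * b) with ((f p - a) * g p + a * (g p - b)) by ring.
  eapply Rle_lt_trans. apply Rabs_triang. rewrite !Rabs_mult.
  assert (E1 : Rabs (f p - a) * Rabs (g p) <= e / (2 * (Rabs b + 1)) * (Rabs b + 1)).
  { apply Rmult_le_compat; try apply Rabs_pos; lra. }
  assert (E2 : Rabs a * Rabs (g p - b) <= (Rabs a + 1) * (e / (2 * (Rabs a + 1)))).
  { apply Rmult_le_compat; try apply Rabs_pos; lra. }
  assert (E3 : e / (2 * (Rabs b + 1)) * (Rabs b + 1) = e / 2) by (field; lra).
  assert (E4 : (Rabs a + 1) * (e / (2 * (Rabs a + 1))) = e / 2) by (field; lra).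
  assert (E5 : Rabs (f p - a) * Rabs (g p) <= Rabs (f p - a) * (Rabs b + 1)).
  { apply Rmult_le_compat_l. apply Rabs_pos. lra. }
  assert (E6 : Rabs (f p - a) * (Rabs b + 1) < e / (2 * (Rabs b + 1)) * (Rabs b + 1)).
  { apply Rmult_lt_compat_r; lra. }
  lra.
Qed.

Lemma conv_inv f a : conv f a -> a <> 0 -> conv (fun p => / f p) (/ a).
Proof.
  intros hf ha e He.
  assert (Pa : 0 < Rabs a) by (apply Rabs_pos_lt; auto).
  destruct (hf (Rmin (Rabs a / 2) (e * (Rabs a * Rabs a) / 2))) as [d [H K]].
  { apply Rmin_glb_lt. lra. apply Rdiv_lt_0_compat. apply Rmult_lt_0_compat; nra. lra. }
  exists d. split. auto. intros p hp. specialize (K p hp).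
  assert (K1 : Rabs (f p - a) < Rabs a / 2) by (eapply Rlt_le_trans; [exact K| apply Rmin_l]).
  assert (K2 : Rabs (f p - a) < e * (Rabs a * Rabs a) / 2) by (eapply Rlt_le_trans; [exact K| apply Rmin_r]).
  assert (Hf : Rabs a / 2 < Rabs (f p)).
  { pose proof (Rabs_triang (a - f p) (f p)). replace (a - f p + f p) with a in H0 by ring.
    rewrite <- Rabs_Ropp in K1. replace (- (f p - a)) with (a - f p) in K1 by ring. lra. }
  assert (fp0 : f p <> 0). { intro Z. rewrite Z, Rabs_R0 in Hf. lra. }
  replace (/ f p - / a) with ((a - f p) / (f p * a)) by (field; auto).
  unfold Rdiv. rewrite Rabs_mult, Rabs_inv, Rabs_mult.
  rewrite <- Rabs_Ropp. replace (- (a - f p)) with (f p - a) by ring.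
  apply (Rmult_lt_reg_r (Rabs (f p) * Rabs a)). nra.
  rewrite Rmult_assoc, Rinv_l by nra. rewrite Rmult_1_r.
  eapply Rlt_le_trans. exact K2.
  assert (Q : Rabs a / 2 * Rabs a <= Rabs (f p) * Rabs a) by (apply Rmult_le_compat_r; lra).
  replace (e * (Rabs a * Rabs a) / 2) with (e * (Rabs a / 2 * Rabs a)) by field.
  apply Rmult_le_compat_l; lra.
Qed.

Lemma conv_ext f g a d0 : 0 < d0 -> (forall p, N d0 p -> f p = g p) -> conv f a -> conv g a.
Proof.
  intros h0 hfg hf e He. destruct (hf e He) as [d [H K]].
  exists (Rmin d d0). split. apply Rmin_glb_lt; lra.
  intros p hp. destruct (N_min _ _ _ H h0 hp) as [p1 p2]. rewrite <- hfg by auto. auto.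
Qed.

Lemma conv_div f g a b : conv f a -> conv g b -> b <> 0 -> conv (fun p => f p / g p) (a / b).
Proof. intros. apply (conv_mult f (fun p => / g p)); auto. apply conv_inv; auto. Qed.

End Conv.

Module VecL.
Import ssreflect ssrbool eqtype ssrnat seq fintype.
Local Open Scope R_scope.

Lemma vupd_eq d (x : vec d) i h : vupd d x i h i = h.
Proof. by rewrite /vupd eqxx. Qed.

Lemma vupd_neq d (x : vec d) i j h : j <> i -> vupd d x i h j = x j.
Proof. move=> ne; rewrite /vupd; case: eqP => //. Qed.

Lemma vupd_vupd d (x : vec d) i h h' : vupd d (vupd d x i h) i h' = vupd d x i h'.
Proof. apply: functional_extensionality => j; rewrite /vupd; by case: eqP. Qed.

Lemma vupd_id d (x : vec d) i : vupd d x i (x i) = x.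
Proof. apply: functional_extensionality => j; rewrite /vupd; case: eqP => // ->. done. Qed.

Fixpoint mixL d (x x' : vec d) (L : list 'I_d) : vec d :=
  match L with
  | nil => x
  | cons j L' => vupd d (mixL d x x' L') j (x' j)
  end.

Lemma mixL_spec d (x x' : vec d) L j : mixL d x x' L j = if j \in L then x' j else x j.
Proof.
  elim: L => [|j0 L IH] /=; first by [].

  rewrite in_cons /vupd IH. by case: eqP => [->|_].
Qed.

Definition allI d : list 'I_d := enum 'I_d.

Lemma mixL_all d (x x' : vec d) : mixL d x x' (allI d) = x'.
Proof. apply: functional_extensionality => j. by rewrite mixL_spec /allI mem_enum. Qed.

Lemma mixL_close d (x x' : vec d) L j : Rabs (mixL d x x' L j - x j) <= Rabs (x' j - x j).
Proof.
  rewrite mixL_spec. case: (j \in L); first by apply: Rle_refl.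
  rewrite /Rminus Rplus_opp_r Rabs_R0. apply: Rabs_pos.
Qed.

Lemma vupd_cases d (x : vec d) i j h :
  (j = i /\ vupd d x i h j = h) \/ (j <> i /\ vupd d x i h j = x j).
Proof. rewrite /vupd; case: eqP => E; [left|right]; by split. Qed.

End VecL.

Definition Nh (d h : R) : Prop := h <> 0 /\ Rabs h < d.

Lemma Nh_mono : forall d1 d2 p, 0 < d1 -> d1 <= d2 -> Nh d1 p -> Nh d2 p.
Proof. unfold Nh. intros; lra. Qed.

Lemma deriv_conv g x l :
  derivable_pt_lim g x l <-> conv R Nh (fun h => (g (x + h) - g x) / h) l.
Proof.
  split.
  - intros H e He. destruct (H e He) as [[dl Hd] K]. exists dl. split. auto.
    intros p [p1 p2]. apply K; auto.
  - intros H e He. destruct (H e He) as [dl [Hd K]]. exists (mkposreal dl Hd).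
    intros h h1 h2. apply K. split; auto.
Qed.

Lemma deriv_local g1 g2 c l : 0 < c -> (forall y, 0 < y -> g1 y = g2 y) ->
  derivable_pt_lim g1 c l -> derivable_pt_lim g2 c l.
Proof.
  intros hc heq H. apply deriv_conv. apply deriv_conv in H.
  apply (conv_ext R Nh Nh_mono (fun h => (g1 (c + h) - g1 c) / h) _ _ c); auto.
  intros p [p1 p2]. rewrite !heq; auto.
  apply Rabs_def2 in p2. lra.
Qed.

Lemma deriv_ext g1 g2 c l : (forall y, g1 y = g2 y) ->
  derivable_pt_lim g1 c l -> derivable_pt_lim g2 c l.
Proof.
  intros heq H. replace g2 with g1; auto. apply functional_extensionality; auto.
Qed.

Lemma deriv_cont g c l : derivable_pt_lim g c l ->
  forall e, 0 < e -> exists dl, 0 < dl /\ forall y, Rabs (y - c) < dl -> Rabs (g y - g c) < e.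
Proof.
  intros H e He.
  assert (C : continuity_pt g c). { apply derivable_continuous_pt. exists l. exact H. }
  destruct (C e He) as [dl [Hd K]]. exists dl. split. auto.
  intros y hy. destruct (Req_dec y c) as [E|E].
  - subst. unfold Rminus. rewrite Rplus_opp_r, Rabs_R0. auto.
  - apply (K y). split. split. exact I. auto. exact hy.
Qed.

Lemma MVT_sym (g g' : R -> R) a b :
  (forall s, Rmin a b <= s <= Rmax a b -> derivable_pt_lim g s (g' s)) ->
  exists xi, Rmin a b <= xi <= Rmax a b /\ g b - g a = g' xi * (b - a).
Proof.
  intros H. destruct (Rtotal_order a b) as [lt|[eq|gt]].
  - destruct (MVT_cor2 g g' a b lt) as [xi [E1 E2]].
    { intros s hs. apply H. rewrite Rmin_left, Rmax_right; lra. }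
    exists xi. rewrite Rmin_left, Rmax_right by lra. split. lra. auto.
  - subst. exists b. rewrite Rmin_left, Rmax_left by lra. split. lra. ring.
  - destruct (MVT_cor2 g g' b a gt) as [xi [E1 E2]].
    { intros s hs. apply H. rewrite Rmin_right, Rmax_left; lra. }
    exists xi. rewrite Rmin_right, Rmax_left by lra. split. lra.
    replace (g b - g a) with (- (g a - g b)) by ring. rewrite E1. ring.
Qed.

Lemma strict_decr (g g' : R -> R) a b : a < b ->
  (forall s, a <= s <= b -> derivable_pt_lim g s (g' s)) ->
  (forall s, a <= s <= b -> g' s < 0) -> g b < g a.
Proof.
  intros hab hd hn. destruct (MVT_cor2 g g' a b hab hd) as [xi [E1 E2]].
  assert (g' xi < 0) by (apply hn; lra).
  assert (g' xi * (b - a) < 0). { apply Rmult_neg_pos; lra. } lra.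
Qed.

Lemma incr_deriv_nonneg g c l : 0 < c ->
  (forall a b, 0 < a -> a < b -> g a < g b) -> derivable_pt_lim g c l -> 0 <= l.
Proof.
  intros hc hinc H. destruct (Rle_or_lt 0 l) as [|hl]; auto. exfalso.
  destruct (H (- l / 2)) as [[dl Hd] K]. lra. simpl in K.
  set (h := Rmin (dl / 2) (c / 2)).
  assert (hp : 0 < h) by (apply Rmin_glb_lt; lra).
  assert (h <= dl / 2) by apply Rmin_l.
  specialize (K h). assert (HK : Rabs ((g (c + h) - g c) / h - l) < - l / 2).
  { apply K. lra. rewrite Rabs_right; lra. }
  assert (g c < g (c + h)) by (apply hinc; lra).
  assert (0 < (g (c + h) - g c) / h) by (apply Rdiv_lt_0_compat; lra).
  apply Rabs_def2 in HK. lra.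
Qed.

Section JC.
Variable d : nat.
Variables (g gc : fun3 d) (gx : fintype.ordinal d -> fun3 d).
Hypothesis Hc : is_dc d g gc.
Hypothesis Hx : forall i, is_dx d g i (gx i).
Hypothesis Cc : cont_cx d gc.
Hypothesis Cx : forall i, cont_cx d (gx i).


Lemma jc_x t c x : dom d t c x -> forall L e, 0 < e -> exists del, 0 < del /\
  forall x' : vec d, (forall j, Rabs (x' j - x j) < del) ->
    Rabs (g t c (VecL.mixL d x x' L) - g t c x) < e.
Proof.
  intros hdom L. induction L as [|j0 L IH]; intros e He.
  - exists 1. split. lra. intros x' _. simpl. unfold Rminus. rewrite Rplus_opp_r, Rabs_R0. auto.
  - destruct (IH (e/2)) as [d1 [H1 K1]]. lra.
    destruct (Cx j0 t c x hdom 1) as [d0 [H0 K0]]. lra.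
    set (M := Rabs (gx j0 t c x) + 1).
    assert (HM : 0 < M) by (unfold M; pose proof (Rabs_pos (gx j0 t c x)); lra).
    exists (Rmin (Rmin d1 d0) (e / (4 * M))). split.
    { apply Rmin_glb_lt. apply Rmin_glb_lt; lra. apply Rdiv_lt_0_compat; lra. }
    intros x' hx'.
    assert (hd1 : forall j, Rabs (x' j - x j) < d1).
    { intro j. eapply Rlt_le_trans. apply hx'. eapply Rle_trans; apply Rmin_l. }
    assert (hd0 : forall j, Rabs (x' j - x j) < d0).
    { intro j. eapply Rlt_le_trans. apply hx'. eapply Rle_trans. apply Rmin_l. apply Rmin_r. }
    assert (hd2 : forall j, Rabs (x' j - x j) < e / (4 * M)).
    { intro j. eapply Rlt_le_trans. apply hx'. apply Rmin_r. }
    set (z := VecL.mixL d x x' L).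
    simpl. fold z.
    specialize (K1 x' hd1). fold z in K1.
    set (phi := fun s => g t c (vupd d z j0 s)).
    set (phi' := fun s => gx j0 t c (vupd d z j0 s)).
    destruct (MVT_sym phi phi' (z j0) (x' j0)) as [xi [Hxi Exi]].
    { intros s _. unfold phi, phi'.
      pose proof (Hx j0 t c (vupd d z j0 s) hdom) as D.
      rewrite VecL.vupd_eq in D.
      eapply deriv_ext; [|exact D]. intro y. simpl. rewrite VecL.vupd_vupd. reflexivity. }
    assert (Cz : Rabs (z j0 - x j0) <= Rabs (x' j0 - x j0)) by apply VecL.mixL_close.
    assert (Cxi : Rabs (xi - x j0) < d0).
    { pose proof (hd0 j0) as A1. assert (A2 : Rabs (z j0 - x j0) < d0) by lra.
      apply Rabs_def2 in A1. apply Rabs_def2 in A2. apply Rabs_def1;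
      destruct (Rle_dec (z j0) (x' j0));
      [rewrite Rmin_left, Rmax_right in Hxi by lra; lra | rewrite Rmin_right, Rmax_left in Hxi by lra; lra
      |rewrite Rmin_left, Rmax_right in Hxi by lra; lra | rewrite Rmin_right, Rmax_left in Hxi by lra; lra]. }
    assert (Bphi : Rabs (phi' xi) < M).
    { unfold phi'. 
      assert (B : Rabs (gx j0 t c (vupd d z j0 xi) - gx j0 t c x) < 1).
      { apply K0. destruct hdom; lra. unfold Rminus; rewrite Rplus_opp_r, Rabs_R0; lra.
        intro j. destruct (VecL.vupd_cases d z j0 j xi) as [[E1 E2]|[E1 E2]]; rewrite E2.
        - subst. auto.
        - unfold z. eapply Rle_lt_trans. apply VecL.mixL_close. auto. }
      unfold M. pose proof (Rabs_triang (gx j0 t c (vupd d z j0 xi) - gx j0 t c x) (gx j0 t c x)).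
      replace (gx j0 t c (vupd d z j0 xi) - gx j0 t c x + gx j0 t c x) with (gx j0 t c (vupd d z j0 xi)) in H by ring.
      lra. }
    assert (Ephi : phi (z j0) = g t c z). { unfold phi. rewrite VecL.vupd_id. reflexivity. }
    assert (Bd : Rabs (x' j0 - z j0) < e / (2 * M)).
    { pose proof (hd2 j0).
      replace (x' j0 - z j0) with ((x' j0 - x j0) - (z j0 - x j0)) by ring.
      eapply Rle_lt_trans. apply Rabs_triang. rewrite Rabs_Ropp.
      replace (e / (2 * M)) with (e / (4 * M) + e / (4 * M)) by (field; lra). lra. }
    assert (HP : Rabs (phi (x' j0) - phi (z j0)) < e / 2).
    { rewrite Exi, Rabs_mult.
      apply Rle_lt_trans with (M * Rabs (x' j0 - z j0)).
      apply Rmult_le_compat_r. apply Rabs_pos. lra.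
      replace (e / 2) with (M * (e / (2 * M))) by (field; lra).
      apply Rmult_lt_compat_l; lra. }
    rewrite Ephi in HP. unfold phi in HP.
    replace (g t c (vupd d z j0 (x' j0)) - g t c x) with
      ((g t c (vupd d z j0 (x' j0)) - g t c z) + (g t c z - g t c x)) by ring.
    eapply Rle_lt_trans. apply Rabs_triang. lra.
Qed.

Lemma jc : cont_cx d g.
Proof.
  intros t c x hdom e He.
  destruct (jc_x t c x hdom (VecL.allI d) (e/2)) as [d1 [H1 K1]]. lra.
  destruct (Cc t c x hdom 1) as [d0 [H0 K0]]. lra.
  destruct hdom as [ht hc].
  set (M := Rabs (gc t c x) + 1).
  assert (HM : 0 < M) by (unfold M; pose proof (Rabs_pos (gc t c x)); lra).
  exists (Rmin (Rmin d1 d0) (Rmin (c / 2) (e / (2 * M)))). split.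
  { apply Rmin_glb_lt; apply Rmin_glb_lt; try lra. apply Rdiv_lt_0_compat; lra. }
  intros c' x' hc' hcc hxx.
  pose proof (Rmin_l (Rmin d1 d0) (Rmin (c / 2) (e / (2 * M)))).
  pose proof (Rmin_r (Rmin d1 d0) (Rmin (c / 2) (e / (2 * M)))).
  pose proof (Rmin_l d1 d0). pose proof (Rmin_r d1 d0).
  pose proof (Rmin_l (c/2) (e / (2 * M))). pose proof (Rmin_r (c/2) (e / (2 * M))).
  assert (X1 : Rabs (g t c x' - g t c x) < e / 2).
  { rewrite <- (VecL.mixL_all d x x'). apply K1. intro j. specialize (hxx j). lra. }
  set (phi := fun s => g t s x'). set (phi' := fun s => gc t s x').
  assert (Hcc : Rabs (c' - c) < c / 2) by lra.
  apply Rabs_def2 in Hcc.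
  destruct (MVT_sym phi phi' c c') as [xi [Hxi Exi]].
  { intros s hs. unfold phi, phi'. apply Hc. split. auto.
    assert (0 < Rmin c c') by (apply Rmin_glb_lt; lra). lra. }
  assert (Bxi : Rabs (phi' xi) < M).
  { unfold phi'. assert (B : Rabs (gc t xi x' - gc t c x) < 1).
    { apply K0.
      - assert (0 < Rmin c c') by (apply Rmin_glb_lt; lra). lra.
      - apply Rabs_def1.
        + apply Rle_lt_trans with (Rmax c c' - c). lra.
          destruct (Rle_dec c c'). rewrite Rmax_right by lra. apply Rabs_def2 in hcc. lra.
          rewrite Rmax_left by lra. lra.
        + apply Rlt_le_trans with (Rmin c c' - c). 
          destruct (Rle_dec c c'). rewrite Rmin_left by lra. lra.
          rewrite Rmin_right by lra. apply Rabs_def2 in hcc. lra. lra.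
      - intro j. specialize (hxx j). lra. }
    unfold M. pose proof (Rabs_triang (gc t xi x' - gc t c x) (gc t c x)) as T.
    replace (gc t xi x' - gc t c x + gc t c x) with (gc t xi x') in T by ring. lra. }
  assert (X2 : Rabs (g t c' x' - g t c x') < e / 2).
  { change (Rabs (phi c' - phi c) < e / 2). rewrite Exi, Rabs_mult.
    apply Rle_lt_trans with (M * Rabs (c' - c)).
    apply Rmult_le_compat_r. apply Rabs_pos. lra.
    replace (e / 2) with (M * (e / (2 * M))) by (field; lra).
    apply Rmult_lt_compat_l; lra. }
  replace (g t c' x' - g t c x) with ((g t c' x' - g t c x') + (g t c x' - g t c x)) by ring.
  eapply Rle_lt_trans. apply Rabs_triang. lra.
Qed.

End JC.

Definition GoodD d (u uc ucc : fun3 d) (ucx : fintype.ordinal d -> fun3 d) : Prop :=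
    is_dc d u uc /\ is_dc d uc ucc /\ (forall i, is_dx d uc i (ucx i)) /\
    cont_cx d ucc /\ (forall i, cont_cx d (ucx i)) /\
    (forall t c x, dom d t c x -> ucc t c x < 0) /\
    exists N, 0 < N /\
      forall t c x i, dom d t c x ->
        - c * ucc t c x / uc t c x + Rabs (ucx i t c x) / uc t c x <= N.

Lemma U2_iff d u : U2 d u <-> U1 d u /\ exists uc ucc ucx, GoodD d u uc ucc ucx.
Proof. unfold U2, GoodD. tauto. Qed.

Section GoodFacts.
Variable d : nat.
Variables (u uc ucc : fun3 d) (ucx : fintype.ordinal d -> fun3 d).
Hypothesis HU : U1 d u.
Hypothesis HG : GoodD d u uc ucc ucx.

Lemma G_inada t x : 0 <= t <= 1 -> Inada (fun c => u t c x).
Proof. intros ht. destruct HU as [_ [H _]]. auto. Qed.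

Lemma G_incr t x a b : 0 <= t <= 1 -> 0 < a -> a < b -> u t a x < u t b x.
Proof. intros ht. destruct (G_inada t x ht) as [_ [H _]]. auto. Qed.

Lemma G_conc t x a b l : 0 <= t <= 1 -> 0 < a -> 0 < b -> a <> b -> 0 < l < 1 ->
  l * u t a x + (1 - l) * u t b x < u t (l * a + (1 - l) * b) x.
Proof. intros ht. destruct (G_inada t x ht) as [H _]. apply H. Qed.

Lemma G_dc t c x : dom d t c x -> derivable_pt_lim (fun c' => u t c' x) c (uc t c x).
Proof. destruct HG as [H _]. apply H. Qed.

Lemma G_dcc t c x : dom d t c x -> derivable_pt_lim (fun c' => uc t c' x) c (ucc t c x).
Proof. destruct HG as [_ [H _]]. apply H. Qed.

Lemma G_dx i t c x : dom d t c x ->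
  derivable_pt_lim (fun h => uc t c (vupd d x i h)) (x i) (ucx i t c x).
Proof. destruct HG as [_ [_ [H _]]]. apply H. Qed.

Lemma G_ccont : cont_cx d ucc.
Proof. destruct HG as [_ [_ [_ [H _]]]]. apply H. Qed.

Lemma G_xcont i : cont_cx d (ucx i).
Proof. destruct HG as [_ [_ [_ [_ [H _]]]]]. apply H. Qed.

Lemma G_neg t c x : dom d t c x -> ucc t c x < 0.
Proof. destruct HG as [_ [_ [_ [_ [_ [H _]]]]]]. apply H. Qed.

Lemma G_bound : exists N, 0 < N /\
      forall t c x i, dom d t c x ->
        - c * ucc t c x / uc t c x + Rabs (ucx i t c x) / uc t c x <= N.
Proof. destruct HG as [_ [_ [_ [_ [_ [_ H]]]]]]. apply H. Qed.

Lemma G_cont : cont_cx d uc.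
Proof.
  apply (jc d uc ucc ucx). intros t c x h; apply G_dcc; auto.
  intros i t c x h; apply G_dx; auto. apply G_ccont. apply G_xcont.
Qed.

Lemma G_decr t x a b : 0 <= t <= 1 -> 0 < a -> a < b -> uc t b x < uc t a x.
Proof.
  intros ht ha hab. apply (strict_decr (fun c => uc t c x) (fun c => ucc t c x)); auto.
  - intros s hs. apply G_dcc. split; auto; lra.
  - intros s hs. apply G_neg. split; auto; lra.
Qed.

Lemma G_pos t c x : dom d t c x -> 0 < uc t c x.
Proof.
  intros [ht hc].
  assert (0 <= uc t (c + 1) x).
  { apply (incr_deriv_nonneg (fun c => u t c x) (c + 1)). lra.
    intros a b ha hab. apply G_incr; auto. apply G_dc. split; auto; lra. }
  assert (uc t (c + 1) x < uc t c x) by (apply G_decr; auto; lra). lra.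
Qed.

Lemma G_decr_le t x a b : 0 <= t <= 1 -> 0 < a -> a <= b -> uc t b x <= uc t a x.
Proof.
  intros ht ha hab. destruct (Req_dec a b). subst. lra.
  left. apply G_decr; auto. lra.
Qed.

Lemma G_lim0 t x : 0 <= t <= 1 -> forall M, exists e, 0 < e /\
  forall c, 0 < c < e -> M < uc t c x.
Proof.
  intros ht M. destruct (G_inada t x ht) as [_ [_ [g' [Hd [_ [H _]]]]]].
  destruct (H M) as [e [He K]]. exists e. split. auto. intros c hc.
  replace (uc t c x) with (g' c). apply K; auto.
  apply (uniqueness_limite (fun c => u t c x) c). apply Hd; lra. apply G_dc. split; auto; lra.
Qed.

Lemma G_liminf t x : 0 <= t <= 1 -> forall e, 0 < e -> exists M,
  forall c, 0 < c -> M < c -> uc t c x < e.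
Proof.
  intros ht e He. destruct (G_inada t x ht) as [_ [_ [g' [Hd [_ [_ H]]]]]].
  destruct (H e He) as [M K]. exists M. intros c hc hM.
  replace (uc t c x) with (g' c). specialize (K c hM). apply Rabs_def2 in K. lra.
  apply (uniqueness_limite (fun c => u t c x) c). apply Hd; lra. apply G_dc. split; auto; lra.
Qed.

End GoodFacts.

Lemma epsdelta_cont h y :
  (forall e, 0 < e -> exists dl, 0 < dl /\ forall z, Rabs (z - y) < dl -> Rabs (h z - h y) < e) ->
  continuity_pt h y.
Proof.
  intros H e He. destruct (H e He) as [dl [Hd K]]. exists dl. split. auto.
  intros z [_ hz]. apply K. exact hz.
Qed.

Definition clamp a b y := Rmax a (Rmin b y).

Lemma clamp_lip a b y z : a <= b -> Rabs (clamp a b z - clamp a b y) <= Rabs (z - y).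
Proof.
  intros hab. unfold clamp, Rmax, Rmin.
  repeat destruct Rle_dec; unfold Rabs; repeat destruct Rcase_abs; lra.
Qed.

Lemma clamp_in a b y : a <= b -> a <= clamp a b y <= b.
Proof. intros hab. unfold clamp, Rmax, Rmin. repeat destruct Rle_dec; lra. Qed.

Lemma clamp_id a b y : a <= y <= b -> clamp a b y = y.
Proof. intros hab. unfold clamp, Rmax, Rmin. repeat destruct Rle_dec; lra. Qed.

Lemma ivt_interval (g : R -> R) a b : a < b ->
  (forall z, a <= z <= b -> forall e, 0 < e -> exists dl, 0 < dl /\
      forall z', a <= z' <= b -> Rabs (z' - z) < dl -> Rabs (g z' - g z) < e) ->
  0 < g a -> g b < 0 -> exists z, a <= z <= b /\ g z = 0.
Proof.
  intros hab hc ha hb.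
  set (h := fun y => - g (clamp a b y)).
  assert (C : continuity h).
  { intro y. apply epsdelta_cont. intros e He.
    destruct (hc (clamp a b y) (clamp_in a b y ltac:(lra)) e He) as [dl [Hd K]].
    exists dl. split. auto. intros z hz. unfold h.
    replace (- g (clamp a b z) - - g (clamp a b y)) with (- (g (clamp a b z) - g (clamp a b y))) by ring.
    rewrite Rabs_Ropp. apply K. apply clamp_in; lra.
    eapply Rle_lt_trans. apply clamp_lip. lra. auto. }
  destruct (IVT h a b C hab) as [z [hz E]].
  { unfold h. rewrite clamp_id by lra. lra. }
  { unfold h. rewrite clamp_id by lra. lra. }
  exists z. split. auto. unfold h in E. rewrite clamp_id in E by lra. lra.
Qed.

Section Two.
Variable d : nat.
Variables (u1 u1c u1cc : fun3 d) (u1cx : fintype.ordinal d -> fun3 d).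
Variables (u2 u2c u2cc : fun3 d) (u2cx : fintype.ordinal d -> fun3 d).
Hypothesis HU1 : U1 d u1.
Hypothesis HG1 : GoodD d u1 u1c u1cc u1cx.
Hypothesis HU2 : U1 d u2.
Hypothesis HG2 : GoodD d u2 u2c u2cc u2cx.

Definition gap t c x y := u1c t y x - u2c t (c - y) x.

Lemma gap_decr t c x y1 y2 : dom d t c x -> 0 < y1 -> y1 < y2 -> y2 < c ->
  gap t c x y2 < gap t c x y1.
Proof.
  intros [ht hc] h1 h12 h2. unfold gap.
  assert (u1c t y2 x < u1c t y1 x) by (apply (G_decr d u1 u1c u1cc u1cx); auto).
  assert (u2c t (c - y1) x < u2c t (c - y2) x) by (apply (G_decr d u2 u2c u2cc u2cx); auto; lra).
  lra.
Qed.

Lemma gap_unique t c x y1 y2 : dom d t c x -> 0 < y1 < c -> 0 < y2 < c ->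
  gap t c x y1 = 0 -> gap t c x y2 = 0 -> y1 = y2.
Proof.
  intros hd h1 h2 e1 e2. destruct (Rtotal_order y1 y2) as [lt|[eq|gt]]; auto.
  - pose proof (gap_decr t c x y1 y2 hd ltac:(lra) lt ltac:(lra)). lra.
  - pose proof (gap_decr t c x y2 y1 hd ltac:(lra) gt ltac:(lra)). lra.
Qed.

Lemma f_exists t c x : dom d t c x -> exists y, 0 < y < c /\ gap t c x y = 0.
Proof.
  intros hd. destruct hd as [ht hc].
  destruct (G_lim0 d u1 u1c u1cc u1cx HU1 HG1 t x ht (u2c t (c / 2) x)) as [e1 [He1 K1]].
  destruct (G_lim0 d u2 u2c u2cc u2cx HU2 HG2 t x ht (u1c t (c / 2) x)) as [e2 [He2 K2]].
  set (a := Rmin e1 c / 2). set (b := c - Rmin e2 c / 2).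
  assert (Ha1 : 0 < Rmin e1 c) by (apply Rmin_glb_lt; lra).
  assert (Ha2 : Rmin e1 c <= e1) by apply Rmin_l. assert (Ha3 : Rmin e1 c <= c) by apply Rmin_r.
  assert (Hb1 : 0 < Rmin e2 c) by (apply Rmin_glb_lt; lra).
  assert (Hb2 : Rmin e2 c <= e2) by apply Rmin_l. assert (Hb3 : Rmin e2 c <= c) by apply Rmin_r.
  assert (ga : 0 < gap t c x a).
  { unfold gap. assert (u2c t (c / 2) x < u1c t a x) by (apply K1; unfold a; lra).
    assert (u2c t (c - a) x <= u2c t (c / 2) x) by (apply (G_decr_le d u2 u2c u2cc u2cx); auto; unfold a; lra).
    lra. }
  assert (gb : gap t c x b < 0).
  { unfold gap. assert (u1c t (c / 2) x < u2c t (c - b) x) by (apply K2; unfold b; lra).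
    assert (u1c t b x <= u1c t (c / 2) x) by (apply (G_decr_le d u1 u1c u1cc u1cx); auto; unfold b; lra).
    lra. }
  assert (hab : a < b).
  { destruct (Rtotal_order a b) as [|[E|E]]; auto. rewrite E in ga. lra. unfold a, b in E. lra. }
  destruct (ivt_interval (gap t c x) a b hab) as [z [hz E]]; auto.
  - intros z hz e He.
    assert (D1 := G_dcc d u1 u1c u1cc u1cx HG1 t z x ltac:(split; auto; unfold a in hz; lra)).
    assert (D2 := G_dcc d u2 u2c u2cc u2cx HG2 t (c - z) x ltac:(split; auto; unfold b in hz; lra)).
    destruct (deriv_cont _ _ _ D1 (e/2)) as [dl1 [H1 L1]]. lra.
    destruct (deriv_cont _ _ _ D2 (e/2)) as [dl2 [H2 L2]]. lra.
    exists (Rmin dl1 dl2). split. apply Rmin_glb_lt; lra.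
    intros z' hz' hzz. pose proof (Rmin_l dl1 dl2). pose proof (Rmin_r dl1 dl2).
    unfold gap.
    assert (A1 : Rabs (u1c t z' x - u1c t z x) < e / 2) by (apply L1; lra).
    assert (A2 : Rabs (u2c t (c - z') x - u2c t (c - z) x) < e / 2).
    { apply L2. replace (c - z' - (c - z)) with (- (z' - z)) by ring. rewrite Rabs_Ropp. lra. }
    replace (u1c t z' x - u2c t (c - z') x - (u1c t z x - u2c t (c - z) x)) with
      ((u1c t z' x - u1c t z x) - (u2c t (c - z') x - u2c t (c - z) x)) by ring.
    eapply Rle_lt_trans. apply Rabs_triang. rewrite Rabs_Ropp. lra.
  - exists z. split. unfold a, b in hz. lra. auto.
Qed.

End Two.

Definition sl2 {d} (g : fun3 d) t y0 (X : vec d) k a :=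
  if Req_EM_T k 0 then a else (g t (y0 + k) X - g t y0 X) / k.

Lemma sl2_id d (g : fun3 d) t y0 X k a : sl2 g t y0 X k a * k = g t (y0 + k) X - g t y0 X.
Proof.
  unfold sl2. destruct (Req_EM_T k 0) as [E|E].
  - subst. rewrite Rplus_0_r. ring.
  - field. auto.
Qed.

Lemma between_abs a b s : Rmin a b <= s <= Rmax a b -> Rabs (s - a) <= Rabs (b - a).
Proof. unfold Rmin, Rmax. intros H. destruct (Rle_dec a b); unfold Rabs; repeat destruct Rcase_abs; lra. Qed.

Lemma sl2_conv d (g gc : fun3 d) t y0 x (K : R -> R) (Xh : R -> vec d) :
  is_dc d g gc -> cont_cx d gc -> dom d t y0 x -> conv R Nh K 0 ->
  (forall e, 0 < e -> exists dl, 0 < dl /\ forall h, Nh dl h -> forall j, Rabs (Xh h j - x j) < e) ->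
  conv R Nh (fun h => sl2 g t y0 (Xh h) (K h) (gc t y0 x)) (gc t y0 x).
Proof.
  intros Hd Hc hd HK HX e He. pose proof hd as [ht hy].
  destruct (Hc t y0 x hd e He) as [d0 [Hd0 K0]].
  set (rho := Rmin d0 (y0 / 2)).
  assert (Hrho : 0 < rho) by (apply Rmin_glb_lt; lra).
  assert (rho <= d0) by apply Rmin_l. assert (rho <= y0/2) by apply Rmin_r.
  destruct (HK rho Hrho) as [d1 [Hd1 K1]].
  destruct (HX d0 Hd0) as [d2 [Hd2 K2]].
  exists (Rmin d1 d2). split. apply Rmin_glb_lt; lra.
  intros h hh. destruct (N_min R Nh Nh_mono _ _ _ Hd1 Hd2 hh) as [h1 h2].
  specialize (K1 h h1). specialize (K2 h h2). rewrite Rminus_0_r in K1.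
  unfold sl2. destruct (Req_EM_T (K h) 0) as [E|E].
  - unfold Rminus. rewrite Rplus_opp_r, Rabs_R0. auto.
  - destruct (MVT_sym (fun s => g t s (Xh h)) (fun s => gc t s (Xh h)) y0 (y0 + K h)) as [xi [Hxi Exi]].
    { intros s hs. apply Hd. split. auto.
      apply between_abs in hs. replace (y0 + K h - y0) with (K h) in hs by ring.
      assert (Q : Rabs (s - y0) < y0 / 2) by lra. apply Rabs_def2 in Q. lra. }
    cbv beta in Exi. replace (y0 + K h - y0) with (K h) in Exi by ring.
    replace ((g t (y0 + K h) (Xh h) - g t y0 (Xh h)) / K h) with (gc t xi (Xh h)) by (rewrite Exi; field; auto).
    apply between_abs in Hxi. replace (y0 + K h - y0) with (K h) in Hxi by ring.
    assert (Q : Rabs (xi - y0) < d0) by lra.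
    assert (Q2 : Rabs (xi - y0) < y0 / 2) by lra. apply Rabs_def2 in Q2.
    apply K0; auto. lra.
Qed.

Lemma ift (A1 A2 B1 B2 D : R -> R) a1 a2 b1 b2 r :
  conv R Nh A1 a1 -> conv R Nh A2 a2 -> conv R Nh B1 b1 -> conv R Nh B2 b2 ->
  a1 + a2 <> 0 -> 0 < r ->
  (forall h, Nh r h -> A1 h * D h + B1 h * h = - A2 h * D h + B2 h * h) ->
  conv R Nh (fun h => (A1 h * D h + B1 h * h) / h) ((a1 * b2 + a2 * b1) / (a1 + a2)).
Proof.
  intros c1 c2 c3 c4 ha hr Eq.
  assert (cS : conv R Nh (fun h => A1 h + A2 h) (a1 + a2)) by (apply conv_plus; auto; exact Nh_mono).
  assert (Pa : 0 < Rabs (a1 + a2)) by (apply Rabs_pos_lt; auto).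
  destruct (cS (Rabs (a1 + a2) / 2)) as [r' [Hr' K']]. lra.
  assert (cE : conv R Nh (fun h => A1 h * ((B2 h - B1 h) / (A1 h + A2 h)) + B1 h)
                 (a1 * ((b2 - b1) / (a1 + a2)) + b1)).
  { apply conv_plus. exact Nh_mono. apply conv_mult. exact Nh_mono. auto.
    apply conv_div. exact Nh_mono. apply conv_minus; auto. exact Nh_mono. auto. auto. auto. }
  replace ((a1 * b2 + a2 * b1) / (a1 + a2)) with (a1 * ((b2 - b1) / (a1 + a2)) + b1) by (field; auto).
  apply (conv_ext R Nh Nh_mono (fun h => A1 h * ((B2 h - B1 h) / (A1 h + A2 h)) + B1 h) _ _ (Rmin r r')). apply Rmin_glb_lt; lra.
  2: exact cE.
  intros h hh. destruct (N_min R Nh Nh_mono _ _ _ hr Hr' hh) as [h1 h2].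
  specialize (K' h h2). specialize (Eq h h1).
  assert (nz : A1 h + A2 h <> 0).
  { intro Z. rewrite Z in K'. rewrite Rminus_0_l, Rabs_Ropp in K'. lra. }
  destruct h1 as [hz _].
  assert (Dh : D h = (B2 h - B1 h) * h / (A1 h + A2 h)).
  { field_simplify_eq; auto. lra. }
  rewrite Dh. field. split; auto.
Qed.

Lemma div_le_aux T K s : 0 < s -> T <= K * s -> T / s <= K.
Proof.
  intros hs h. apply (Rmult_le_reg_r s). auto.
  replace (T / s * s) with T by (field; lra). auto.
Qed.

Lemma bound_alg c f0 a b v p q N1 N2 : 0 < f0 < c -> a < 0 -> b < 0 -> 0 < v ->
  - f0 * a / v + Rabs p / v <= N1 -> - (c - f0) * b / v + Rabs q / v <= N2 ->
  - c * (a * b / (a + b)) / v + Rabs ((a * q + b * p) / (a + b)) / v <= 2 * (N1 + N2).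
Proof.
  intros hf ha hb hv h1 h2.
  assert (e1 : (- f0 * a / v + Rabs p / v) * v = - f0 * a + Rabs p) by (field; lra).
  assert (e2 : (- (c - f0) * b / v + Rabs q / v) * v = - (c - f0) * b + Rabs q) by (field; lra).
  assert (k1 : - f0 * a + Rabs p <= N1 * v) by (rewrite <- e1; apply Rmult_le_compat_r; lra).
  assert (k2 : - (c - f0) * b + Rabs q <= N2 * v) by (rewrite <- e2; apply Rmult_le_compat_r; lra).
  pose proof (Rabs_pos p). pose proof (Rabs_pos q).
  assert (0 <= - f0 * a) by nra. assert (0 <= - (c - f0) * b) by nra.
  assert (HN1 : 0 <= N1 * v) by lra. assert (HN2 : 0 <= N2 * v) by lra.
  set (s := - (a + b)).
  assert (hs : 0 < s) by (unfold s; lra).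
  assert (T1 : - c * (a * b / (a + b)) = c * a * b / s) by (unfold s; field; lra).
  assert (T2 : Rabs ((a * q + b * p) / (a + b)) = Rabs (a * q + b * p) / s).
  { unfold Rdiv. rewrite Rabs_mult, Rabs_inv. unfold s. rewrite (Rabs_left (a + b)) by lra. reflexivity. }
  assert (B1 : c * a * b / s <= (N1 + N2) * v).
  { apply div_le_aux. auto.
    assert (c * a * b = (- f0 * a) * (- b) + (- (c - f0) * b) * (- a)) by ring.
    assert ((- f0 * a) * (- b) <= N1 * v * (- b)) by (apply Rmult_le_compat_r; lra).
    assert ((- (c - f0) * b) * (- a) <= N2 * v * (- a)) by (apply Rmult_le_compat_r; lra).
    assert (N1 * v * (- b) <= N1 * v * s) by (apply Rmult_le_compat_l; unfold s; lra).
    assert (N2 * v * (- a) <= N2 * v * s) by (apply Rmult_le_compat_l; unfold s; lra).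
    replace ((N1 + N2) * v * s) with (N1 * v * s + N2 * v * s) by ring. lra. }
  assert (B2 : Rabs (a * q + b * p) / s <= (N1 + N2) * v).
  { apply div_le_aux. auto.
    eapply Rle_trans. apply Rabs_triang. rewrite !Rabs_mult.
    rewrite (Rabs_left a), (Rabs_left b) by lra.
    assert (Rabs q <= N2 * v) by lra. assert (Rabs p <= N1 * v) by lra.
    assert (- a * Rabs q <= - a * (N2 * v)) by (apply Rmult_le_compat_l; lra).
    assert (- b * Rabs p <= - b * (N1 * v)) by (apply Rmult_le_compat_l; lra).
    assert (N1 * v * (- b) <= N1 * v * s) by (apply Rmult_le_compat_l; unfold s; lra).
    assert (N2 * v * (- a) <= N2 * v * s) by (apply Rmult_le_compat_l; unfold s; lra).
    replace ((N1 + N2) * v * s) with (N1 * v * s + N2 * v * s) by ring. nra. }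
  rewrite T1, T2.
  replace (c * a * b / s / v + Rabs (a * q + b * p) / s / v) with
     ((c * a * b / s + Rabs (a * q + b * p) / s) / v) by (field; lra).
  apply div_le_aux. auto. lra.
Qed.

Definition Ncx {d} c (x : vec d) (dl : R) (p : R * vec d) :=
  0 < fst p /\ Rabs (fst p - c) < dl /\ forall j, Rabs (snd p j - x j) < dl.

Lemma Ncx_mono d c (x : vec d) : forall d1 d2 p, 0 < d1 -> d1 <= d2 -> Ncx c x d1 p -> Ncx c x d2 p.
Proof. unfold Ncx. intros d1 d2 p h1 h2 [a [b e]]. split; auto. split. lra. intro j. specialize (e j). lra. Qed.

Lemma cc_conv d (g : fun3 d) t c x : cont_cx d g -> dom d t c x ->
  conv (R * vec d) (Ncx c x) (fun p => g t (fst p) (snd p)) (g t c x).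
Proof.
  intros H hd e He. destruct (H t c x hd e He) as [dl [Hdl K]]. exists dl. split. auto.
  intros [c' x'] [h1 [h2 h3]]. simpl in *. apply K; auto.
Qed.

Lemma conv_cc d (g : fun3 d) :
  (forall t c x, dom d t c x -> conv (R * vec d) (Ncx c x) (fun p => g t (fst p) (snd p)) (g t c x)) ->
  cont_cx d g.
Proof.
  intros H t c x hd e He. destruct (H t c x hd e He) as [dl [Hdl K]]. exists dl. split. auto.
  intros c' x' h1 h2 h3. apply (K (c', x')). unfold Ncx. simpl. auto.
Qed.

Lemma cc_fst d c (x : vec d) : conv (R * vec d) (Ncx c x) (fun p => fst p) c.
Proof. intros e He. exists e. split. auto. intros p [_ [h _]]. auto. Qed.

Lemma comp_cont d (g phi : fun3 d) : cont_cx d g -> cont_cx d phi ->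
  (forall t c x, dom d t c x -> 0 < phi t c x) ->
  cont_cx d (fun t c x => g t (phi t c x) x).
Proof.
  intros Hg Hp Hpos t c x hd e He. pose proof hd as [ht hc].
  destruct (Hg t (phi t c x) x ltac:(split; auto) e He) as [d1 [Hd1 K1]].
  destruct (Hp t c x hd d1 Hd1) as [d2 [Hd2 K2]].
  exists (Rmin d1 d2). split. apply Rmin_glb_lt; lra.
  intros c' x' h1 h2 h3. pose proof (Rmin_l d1 d2). pose proof (Rmin_r d1 d2).
  apply K1. apply Hpos. split; auto. apply K2; auto. lra. intro j. specialize (h3 j). lra.
  intro j. specialize (h3 j). lra.
Qed.

Definition qq (k m n : nat) : R := (INR k - INR m) / INR (S n).

Lemma IZR_nat_diff z : IZR z = INR (Z.to_nat z) - INR (Z.to_nat (- z)).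
Proof.
  destruct (Z_le_gt_dec 0 z).
  - assert (E : Z.to_nat (- z) = 0%nat) by lia. rewrite E, INR_0, INR_IZR_INZ, Z2Nat.id by lia. ring.
  - assert (E : Z.to_nat z = 0%nat) by lia. rewrite E, INR_0, INR_IZR_INZ, Z2Nat.id by lia.
    rewrite opp_IZR. ring.
Qed.

Lemma dense_qq a b : a < b -> exists k m n, a < qq k m n < b.
Proof.
  intros hab. destruct (archimed_cor1 (b - a)) as [N [HN1 HN2]]. lra.
  destruct N as [|n]. lia.
  assert (HP : 0 < INR (S n)) by (apply lt_0_INR; lia).
  set (w := a * INR (S n)). destruct (archimed w) as [A1 A2].
  exists (Z.to_nat (up w)), (Z.to_nat (- up w)), n. unfold qq. rewrite <- IZR_nat_diff.
  split.
  - apply (Rmult_lt_reg_r (INR (S n))). auto. unfold Rdiv. rewrite Rmult_assoc, Rinv_l, Rmult_1_r by lra.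
    unfold w in *. lra.
  - apply (Rmult_lt_reg_r (INR (S n))). auto. unfold Rdiv. rewrite Rmult_assoc, Rinv_l, Rmult_1_r by lra.
    assert (/ INR (S n) * INR (S n) = 1) by (field; lra).
    assert (1 < (b - a) * INR (S n)).
    { replace 1 with (/ INR (S n) * INR (S n)) by (field; lra). apply Rmult_lt_compat_r; auto. }
    unfold w in *. lra.
Qed.

Section Meas.
Variable d : nat.

Definition Dm (p : Pt d) : Prop := dom d (fst (fst p)) (snd (fst p)) (snd p).

Lemma borel_open O : open_Pt d O -> borel d O.
Proof. intros H F _ HO. apply HO. auto. Qed.

Lemma borel_compl A : borel d A -> borel d (fun p => ~ A p).
Proof. intros H F HF HO. pose proof HF as [_ [Hc _]]. apply Hc. apply H; auto. Qed.

Lemma borel_union (A : nat -> Pt d -> Prop) : (forall n, borel d (A n)) -> borel d (fun p => exists n, A n p).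
Proof. intros H F HF HO. pose proof HF as [_ [_ Hu]]. apply Hu. intro n. apply H; auto. Qed.

Lemma borel_True : borel d (fun _ => True).
Proof. intros F [H _] _. exact H. Qed.

Lemma borel_ext A B : (forall p, A p <-> B p) -> borel d A -> borel d B.
Proof.
  intros H HA. replace B with A; auto. apply functional_extensionality. intro p.
  apply propositional_extensionality. auto.
Qed.

Lemma borel_False : borel d (fun _ => False).
Proof. apply (borel_ext (fun p => ~ True)). intuition. apply borel_compl, borel_True. Qed.

Lemma borel_inter A B : borel d A -> borel d B -> borel d (fun p => A p /\ B p).
Proof.
  intros HA HB.
  set (C := fun (n : nat) (p : Pt d) => match n with O => ~ A p | _ => ~ B p end).
  apply (borel_ext (fun p => ~ exists n, C n p)).
  - intro p. split.
    + intro H. split; apply NNPP; intro K; apply H; [exists O | exists 1%nat]; exact K.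
    + intros [a b] [n H]. destruct n; simpl in H; auto.
  - apply borel_compl. apply borel_union. intro n. destruct n; apply borel_compl; auto.
Qed.

Lemma borel_and_const (P : Prop) A : (P -> borel d A) -> borel d (fun p => P /\ A p).
Proof.
  intros H. destruct (classic P) as [hp|hp].
  - apply (borel_ext A). intuition. auto.
  - apply (borel_ext (fun _ => False)). intuition. apply borel_False.
Qed.

Lemma borel_preimage (phi : Pt d -> Pt d) A :
  (forall O, open_Pt d O -> open_Pt d (fun p => O (phi p))) ->
  borel d A -> borel d (fun p => A (phi p)).
Proof.
  intros Hphi HA F HF HO.
  set (F' := fun B : Pt d -> Prop => F (fun p => B (phi p))).
  change (F' A). apply HA.
  - destruct HF as [H1 [H2 H3]]. split; [|split].
    + exact H1.
    + intros B hB. apply H2. exact hB.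
    + intros An hA. apply (H3 (fun n p => An n (phi p))). exact hA.
  - intros O hO. apply HO. apply Hphi. auto.
Qed.

Lemma borel_Dm : borel d Dm.
Proof.
  apply (borel_ext (fun p => (~ (fst (fst p) < 0) /\ ~ (1 < fst (fst p))) /\ 0 < snd (fst p))).
  { intro p. unfold Dm, dom. lra. }
  apply borel_inter; [apply borel_inter|]; try apply borel_compl; apply borel_open.
  - intros p hp. exists (- fst (fst p)). split. lra. intros q [h _]. apply Rabs_def2 in h. lra.
  - intros p hp. exists (fst (fst p) - 1). split. lra. intros q [h _]. apply Rabs_def2 in h. lra.
  - intros p hp. exists (snd (fst p)). split. lra. intros q [_ [h _]]. apply Rabs_def2 in h. lra.
Qed.

Definition Lset (G : Pt d -> R) a := fun p => Dm p /\ a < G p.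

Lemma meas_of_L (g : fun3 d) :
  (forall a, borel d (Lset (fun p => g (fst (fst p)) (snd (fst p)) (snd p)) a)) -> measurable3 d g.
Proof.
  intros H V HV. set (G := fun p : Pt d => g (fst (fst p)) (snd (fst p)) (snd p)).
  fold G in H. change (borel d (fun p => Dm p /\ V (G p))).
  assert (HU : forall b, borel d (fun p => Dm p /\ G p < b)).
  { intro b. apply (borel_ext (fun p => Dm p /\ exists n, ~ Lset G (b - / INR (S n)) p)).
    - intro p. split.
      + intros [hd [n hn]]. split; auto. apply NNPP. intro K. apply hn. split; auto.
        assert (0 < / INR (S n)) by (apply Rinv_0_lt_compat, lt_0_INR; lia). lra.
      + intros [hd hb]. split; auto. destruct (archimed_cor1 (b - G p)) as [N [HN1 HN2]]. lra.
        destruct N as [|n]. lia. exists n. intros [_ K]. lra.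
    - apply borel_inter. apply borel_Dm. apply borel_union. intro n. apply borel_compl. apply H. }
  apply (borel_ext (fun p => exists k1 m1 n1 k2 m2 n2,
     (forall z, qq k1 m1 n1 < z < qq k2 m2 n2 -> V z) /\
     (Lset G (qq k1 m1 n1) p /\ (Dm p /\ G p < qq k2 m2 n2)))).
  - intro p. split.
    + intros [k1 [m1 [n1 [k2 [m2 [n2 X]]]]]]. destruct X as [HI [[hd h1] [_ h2]]]. split. exact hd. apply HI. lra.
    + intros [hd hv]. destruct (HV (G p) hv) as [e [He K]].
      destruct (dense_qq (G p - e) (G p)) as [k1 [m1 [n1 Q1]]]. lra.
      destruct (dense_qq (G p) (G p + e)) as [k2 [m2 [n2 Q2]]]. lra.
      exists k1, m1, n1, k2, m2, n2. split.
      * intros z hz. apply K. apply Rabs_def1; lra.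
      * split; split; auto; lra.
  - do 6 (apply borel_union; intro). apply borel_and_const. intros _.
    apply borel_inter. apply H. apply HU.
Qed.

Lemma L_of_meas (g : fun3 d) : measurable3 d g ->
  forall a, borel d (Lset (fun p => g (fst (fst p)) (snd (fst p)) (snd p)) a).
Proof.
  intros H a. apply (H (fun z => a < z)).
  intros y hy. exists (y - a). split. lra. intros z hz. apply Rabs_def2 in hz. lra.
Qed.

Lemma L_sum (G H : Pt d -> R) : (forall a, borel d (Lset G a)) -> (forall a, borel d (Lset H a)) ->
  forall a, borel d (Lset (fun p => G p + H p) a).
Proof.
  intros HG HH a.
  apply (borel_ext (fun p => exists k m n, Lset G (qq k m n) p /\ Lset H (a - qq k m n) p)).
  - intro p. split.
    + intros [k [m [n [[hd h1] [_ h2]]]]]. split; auto. lra.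
    + intros [hd h]. destruct (dense_qq (a - H p) (G p)) as [k [m [n Q]]]. lra.
      exists k, m, n. split; split; auto; lra.
  - do 3 (apply borel_union; intro). apply borel_inter; auto.
Qed.

Lemma L_scale (g : fun3 d) s : measurable3 d g -> 0 < s <= 1 ->
  forall a, borel d (Lset (fun p => g (fst (fst p)) (s * snd (fst p)) (snd p)) a).
Proof.
  intros Hg hs a.
  set (phi := fun p : Pt d => (fst (fst p), s * snd (fst p), snd p)).
  apply (borel_ext (fun p => Dm p /\ Lset (fun p => g (fst (fst p)) (snd (fst p)) (snd p)) a (phi p))).
  - intro p. unfold Lset, phi, Dm, dom. simpl. split.
    + intros [h1 [h2 h3]]. auto.
    + intros [[h1 h2] h3]. repeat split; auto; try lra. apply Rmult_lt_0_compat; lra.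
  - apply borel_inter. apply borel_Dm.
    apply (borel_preimage phi). 2: apply L_of_meas; auto.
    intros O HO p hp. destruct (HO (phi p) hp) as [e [He K]]. exists e. split. auto.
    intros q [h1 [h2 h3]]. apply K. unfold phi, close. simpl. split; auto. split; auto.
    replace (s * snd (fst p) - s * snd (fst q)) with (s * (snd (fst p) - snd (fst q))) by ring.
    rewrite Rabs_mult, Rabs_right by lra.
    apply Rle_lt_trans with (1 * Rabs (snd (fst p) - snd (fst q))).
    apply Rmult_le_compat_r. apply Rabs_pos. lra. lra.
Qed.

End Meas.

Section Meas2.
Variable d : nat.
Variables (u1 u2 u : fun3 d).
Hypothesis HU1 : U1 d u1.
Hypothesis HU2 : U1 d u2.
Hypothesis HS : is_supconv d u1 u2 u.

Lemma U1_cont (w : fun3 d) : U1 d w -> forall t x c, 0 <= t <= 1 -> 0 < c ->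
  forall e, 0 < e -> exists dl, 0 < dl /\ forall y, Rabs (y - c) < dl -> Rabs (w t y x - w t c x) < e.
Proof.
  intros [_ [HI _]] t x c ht hc. destruct (HI t x ht) as [_ [_ [g' [Hd _]]]].
  apply (deriv_cont (fun c => w t c x) c (g' c)). apply Hd. auto.
Qed.

Lemma meas_supconv : measurable3 d u.
Proof.
  apply meas_of_L. intro a.
  set (S := fun s (p : Pt d) => u1 (fst (fst p)) (s * snd (fst p)) (snd p) +
                                u2 (fst (fst p)) ((1 - s) * snd (fst p)) (snd p)).
  apply (borel_ext d (fun p => exists k m n, (0 < qq k m n < 1) /\ Lset d (S (qq k m n)) a p)).
  - intro p. destruct p as [[t c] x]. unfold Lset, S, Dm. simpl. split.
    + intros [k [m [n [hs [hd ha]]]]]. split; auto.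
      eapply Rlt_le_trans. exact ha. destruct (HS t c x hd) as [H1 _]. apply H1.
      exists (qq k m n * c). destruct hd. split. split. nra. nra.
      f_equal. f_equal. ring.
    + intros [hd ha]. pose proof hd as [ht hc].
      assert (Hex : exists c1, 0 < c1 < c /\ a < u1 t c1 x + u2 t (c - c1) x).
      { apply NNPP. intro K. destruct (HS t c x hd) as [_ H2].
        assert (u t c x <= a). { apply H2. intros v [c1 [hc1 ->]]. apply Rnot_lt_le. intro L. apply K. exists c1. auto. }
        lra. }
      destruct Hex as [c1 [hc1 hv]].
      set (eps := u1 t c1 x + u2 t (c - c1) x - a).
      destruct (U1_cont u1 HU1 t x c1 ht ltac:(lra) (eps/2)) as [d1 [Hd1 K1]]. unfold eps; lra.
      destruct (U1_cont u2 HU2 t x (c - c1) ht ltac:(lra) (eps/2)) as [d2 [Hd2 K2]]. unfold eps; lra.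
      set (eta := Rmin (Rmin d1 d2) c1).
      assert (Heta : 0 < eta) by (unfold eta; repeat apply Rmin_glb_lt; lra).
      assert (eta <= d1 /\ eta <= d2 /\ eta <= c1) as [E1 [E2 E3]].
      { unfold eta. pose proof (Rmin_l (Rmin d1 d2) c1). pose proof (Rmin_r (Rmin d1 d2) c1).
        pose proof (Rmin_l d1 d2). pose proof (Rmin_r d1 d2). lra. }
      destruct (dense_qq ((c1 - eta) / c) (c1 / c)) as [k [m [n Q]]].
      { unfold Rdiv. apply Rmult_lt_compat_r. apply Rinv_0_lt_compat; lra. lra. }
      set (s := qq k m n) in *.
      assert (Q1 : c1 - eta < s * c < c1).
      { destruct Q as [q1 q2]. split.
        - apply (Rmult_lt_compat_r c) in q1; auto. replace ((c1 - eta) / c * c) with (c1 - eta) in q1 by (field; lra). lra.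
        - apply (Rmult_lt_compat_r c) in q2; auto. replace (c1 / c * c) with c1 in q2 by (field; lra). lra. }
      exists k, m, n. fold s. split.
      { split. nra. nra. }
      split; auto.
      assert (A1 : Rabs (u1 t (s * c) x - u1 t c1 x) < eps / 2) by (apply K1; apply Rabs_def1; lra).
      assert (A2 : Rabs (u2 t ((1 - s) * c) x - u2 t (c - c1) x) < eps / 2) by (apply K2; apply Rabs_def1; lra).
      apply Rabs_def2 in A1. apply Rabs_def2 in A2. unfold eps in *. lra.
  - do 3 (apply borel_union; intro). apply borel_and_const. intros [h0 h1].
    unfold S. apply L_sum.
    + apply L_scale. apply HU1. lra.
    + apply L_scale. apply HU2. lra.
Qed.

End Meas2.

Section Core.
Variable d : nat.
Variables (u1 u1c u1cc : fun3 d) (u1cx : fintype.ordinal d -> fun3 d).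
Variables (u2 u2c u2cc : fun3 d) (u2cx : fintype.ordinal d -> fun3 d).
Variables (u f : fun3 d).
Hypothesis HU1 : U1 d u1.
Hypothesis HG1 : GoodD d u1 u1c u1cc u1cx.
Hypothesis HU2 : U1 d u2.
Hypothesis HG2 : GoodD d u2 u2c u2cc u2cx.
Hypothesis HS : is_supconv d u1 u2 u.
Hypothesis Hf : forall t c x, dom d t c x ->
  0 < f t c x < c /\ u1c t (f t c x) x = u2c t (c - f t c x) x.

Lemma C_ge t c x y : dom d t c x -> 0 < y < c -> u1 t y x + u2 t (c - y) x <= u t c x.
Proof. intros hd hy. destruct (HS t c x hd) as [H _]. apply H. exists y. split; auto. Qed.

Lemma C_max t c x y : dom d t c x -> 0 < y < c ->
  u1 t y x + u2 t (c - y) x <= u1 t (f t c x) x + u2 t (c - f t c x) x.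
Proof.
  intros hd hy. pose proof hd as [ht hc]. destruct (Hf t c x hd) as [hf E].
  set (f0 := f t c x) in *.
  destruct (Rtotal_order y f0) as [lt|[eq|gt]].
  - destruct (MVT_cor2 (fun s => u1 t s x) (fun s => u1c t s x) y f0 lt) as [xi [E1 H1]].
    { intros s hs. apply (G_dc d u1 u1c u1cc u1cx HG1). split; auto; lra. }
    destruct (MVT_cor2 (fun s => u2 t s x) (fun s => u2c t s x) (c - f0) (c - y)) as [eta [E2 H2]].
    lra. { intros s hs. apply (G_dc d u2 u2c u2cc u2cx HG2). split; auto; lra. }
    assert (u1c t f0 x < u1c t xi x) by (apply (G_decr d u1 u1c u1cc u1cx); auto; lra).
    assert (u2c t eta x < u2c t (c - f0) x) by (apply (G_decr d u2 u2c u2cc u2cx); auto; lra).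
    simpl in E1, E2.
    assert ((u2c t eta x - u1c t xi x) * (f0 - y) < 0). apply Rmult_neg_pos; lra.
    replace (c - y - (c - f0)) with (f0 - y) in E2 by ring. nra.
  - subst. lra.
  - destruct (MVT_cor2 (fun s => u1 t s x) (fun s => u1c t s x) f0 y gt) as [xi [E1 H1]].
    { intros s hs. apply (G_dc d u1 u1c u1cc u1cx HG1). split; auto; lra. }
    destruct (MVT_cor2 (fun s => u2 t s x) (fun s => u2c t s x) (c - y) (c - f0)) as [eta [E2 H2]].
    lra. { intros s hs. apply (G_dc d u2 u2c u2cc u2cx HG2). split; auto; lra. }
    assert (u1c t xi x < u1c t f0 x) by (apply (G_decr d u1 u1c u1cc u1cx); auto; lra).
    assert (u2c t (c - f0) x < u2c t eta x) by (apply (G_decr d u2 u2c u2cc u2cx); auto; lra).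
    simpl in E1, E2.
    assert ((u1c t xi x - u2c t eta x) * (y - f0) < 0). apply Rmult_neg_pos; lra.
    replace (c - f0 - (c - y)) with (y - f0) in E2 by ring. nra.
Qed.

Lemma C_val t c x : dom d t c x -> u t c x = u1 t (f t c x) x + u2 t (c - f t c x) x.
Proof.
  intros hd. destruct (HS t c x hd) as [H1 H2]. destruct (Hf t c x hd) as [hf _].
  apply Rle_antisym.
  - apply H2. intros v [y [hy ->]]. apply C_max; auto.
  - apply H1. exists (f t c x). split; auto.
Qed.

Lemma C_incr t x a b : 0 <= t <= 1 -> 0 < a -> a < b -> u t a x < u t b x.
Proof.
  intros ht ha hab. assert (hda : dom d t a x) by (split; auto).
  destruct (Hf t a x hda) as [hf _]. rewrite (C_val t a x hda).
  set (fa := f t a x) in *.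
  assert (u1 t fa x < u1 t (fa + (b - a)) x) by (apply (G_incr d u1 HU1); auto; lra).
  assert (u1 t (fa + (b - a)) x + u2 t (b - (fa + (b - a))) x <= u t b x).
  { apply C_ge. split; auto; lra. lra. }
  replace (b - (fa + (b - a))) with (a - fa) in H0 by ring. lra.
Qed.

Lemma C_conc t x a b l : 0 <= t <= 1 -> 0 < a -> 0 < b -> a <> b -> 0 < l < 1 ->
  l * u t a x + (1 - l) * u t b x < u t (l * a + (1 - l) * b) x.
Proof.
  intros ht ha hb hab hl.
  assert (hda : dom d t a x) by (split; auto). assert (hdb : dom d t b x) by (split; auto).
  destruct (Hf t a x hda) as [hfa _]. destruct (Hf t b x hdb) as [hfb _].
  rewrite (C_val t a x hda), (C_val t b x hdb).
  set (fa := f t a x) in *. set (fb := f t b x) in *.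
  set (m := l * a + (1 - l) * b).
  set (y := l * fa + (1 - l) * fb).
  assert (Hy : 0 < y < m) by (unfold y, m; nra).
  assert (hdm : dom d t m x) by (split; auto; lra).
  assert (G : u1 t y x + u2 t (m - y) x <= u t m x) by (apply C_ge; auto).
  assert (Em : m - y = l * (a - fa) + (1 - l) * (b - fb)) by (unfold m, y; ring).
  rewrite Em in G.
  assert (A1 : l * u1 t fa x + (1 - l) * u1 t fb x <= u1 t y x).
  { destruct (Req_dec fa fb) as [E|E].
    - unfold y. rewrite E. replace (l * fb + (1 - l) * fb) with fb by ring. lra.
    - left. apply (G_conc d u1 HU1); auto; lra. }
  assert (A2 : l * u2 t (a - fa) x + (1 - l) * u2 t (b - fb) x
               <= u2 t (l * (a - fa) + (1 - l) * (b - fb)) x).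
  { destruct (Req_dec (a - fa) (b - fb)) as [E|E].
    - rewrite E. replace (l * (b - fb) + (1 - l) * (b - fb)) with (b - fb) by ring. lra.
    - left. apply (G_conc d u2 HU2); auto; lra. }
  assert (S : l * u1 t fa x + (1 - l) * u1 t fb x < u1 t y x \/
              l * u2 t (a - fa) x + (1 - l) * u2 t (b - fb) x
               < u2 t (l * (a - fa) + (1 - l) * (b - fb)) x).
  { destruct (Req_dec fa fb) as [E|E].
    - right. apply (G_conc d u2 HU2); auto; try lra. all: try (intro Z; apply hab; lra).
    - left. apply (G_conc d u1 HU1); auto; lra. }
  destruct S; lra.
Qed.

Definition uc0 t c x := u1c t (f t c x) x.

Lemma C_dc : is_dc d u uc0.
Proof.
  intros t c x hd. pose proof hd as [ht hc]. destruct (Hf t c x hd) as [hf _].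
  unfold uc0. set (f0 := f t c x) in *.
  assert (D := G_dc d u1 u1c u1cc u1cx HG1 t f0 x ltac:(split; auto; lra)).
  intros e He. destruct (D e He) as [[dl Hdl] K]. simpl in K.
  assert (Hm : 0 < Rmin dl f0) by (apply Rmin_glb_lt; lra).
  exists (mkposreal _ Hm). simpl. intros h hh hr.
  pose proof (Rmin_l dl f0). pose proof (Rmin_r dl f0).
  assert (hr' : Rabs h < f0) by lra. assert (hrd : Rabs h < dl) by lra.
  apply Rabs_def2 in hr'.
  assert (K1 := K h hh hrd).
  assert (K2 := K (- h) ltac:(lra) ltac:(rewrite Rabs_Ropp; lra)).
  assert (B1 : u1 t (f0 + h) x - u1 t f0 x <= u t (c + h) x - u t c x).
  { rewrite (C_val t c x hd). fold f0.
    assert (u1 t (f0 + h) x + u2 t (c + h - (f0 + h)) x <= u t (c + h) x).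
    { apply C_ge. split; auto; lra. lra. }
    replace (c + h - (f0 + h)) with (c - f0) in H1 by ring. lra. }
  assert (B2 : u1 t (f0 + - h) x - u1 t f0 x <= u t (c + - h) x - u t c x).
  { rewrite (C_val t c x hd). fold f0.
    assert (u1 t (f0 + - h) x + u2 t (c + - h - (f0 + - h)) x <= u t (c + - h) x).
    { apply C_ge. split; auto; lra. lra. }
    replace (c + - h - (f0 + - h)) with (c - f0) in H1 by ring. lra. }
  assert (B3 : u t (c + h) x - u t c x <= u t c x - u t (c + - h) x).
  { assert (/2 * u t (c + h) x + (1 - /2) * u t (c - h) x < u t (/2 * (c + h) + (1 - /2) * (c - h)) x).
    { apply C_conc; auto; lra. }
    replace (/2 * (c + h) + (1 - /2) * (c - h)) with c in H1 by field.
    replace (c + - h) with (c - h) by ring. lra. }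
  set (Dq := (u t (c + h) x - u t c x) / h).
  set (L1 := (u1 t (f0 + h) x - u1 t f0 x) / h) in *.
  set (L2 := (u1 t (f0 + - h) x - u1 t f0 x) / - h) in *.
  assert (Dq * h = u t (c + h) x - u t c x) by (unfold Dq; field; auto).
  assert (L1 * h = u1 t (f0 + h) x - u1 t f0 x) by (unfold L1; field; auto).
  assert (L2 * - h = u1 t (f0 + - h) x - u1 t f0 x) by (unfold L2; field; auto).
  apply Rabs_def2 in K1. apply Rabs_def2 in K2. apply Rabs_def1.
  - destruct (Rlt_or_le 0 h).
    + assert (Dq * h <= L2 * h) by lra. assert (Dq <= L2) by (apply (Rmult_le_reg_r h); lra). lra.
    + assert (h < 0) by lra. assert (L1 * h <= Dq * h) by lra.
      assert (Dq <= L1) by (apply (Rmult_le_reg_r (- h)); lra). lra.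
  - destruct (Rlt_or_le 0 h).
    + assert (L1 * h <= Dq * h) by lra. assert (L1 <= Dq) by (apply (Rmult_le_reg_r h); lra). lra.
    + assert (h < 0) by lra. assert (Dq * h <= L2 * h) by lra.
      assert (L2 <= Dq) by (apply (Rmult_le_reg_r (- h)); lra). lra.
Qed.


Lemma C_fcont : cont_cx d f.
Proof.
  intros t c x hd eta Heta. pose proof hd as [ht hc]. destruct (Hf t c x hd) as [hf E0].
  set (f0 := f t c x) in *.
  set (et := Rmin eta (Rmin f0 (c - f0) / 2)).
  assert (Het : 0 < et). { unfold et. apply Rmin_glb_lt. auto. assert (0 < Rmin f0 (c - f0)) by (apply Rmin_glb_lt; lra). lra. }
  assert (et <= eta) by apply Rmin_l.
  assert (et <= Rmin f0 (c - f0) / 2) by apply Rmin_r.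
  pose proof (Rmin_l f0 (c - f0)). pose proof (Rmin_r f0 (c - f0)).
  set (yl := f0 - et). set (yr := f0 + et).
  assert (Hyl : 0 < yl) by (unfold yl; lra). assert (Hyr : yr < c) by (unfold yr; lra).
  assert (Hylr : yl < yr) by (unfold yl, yr; lra).
  assert (g0 : gap d u1c u2c t c x f0 = 0) by (unfold gap; lra).
  set (m1 := gap d u1c u2c t c x yl). set (m2 := - gap d u1c u2c t c x yr).
  assert (Hm1 : 0 < m1).
  { unfold m1. pose proof (gap_decr d u1 u1c u1cc u1cx u2 u2c u2cc u2cx HG1 HG2 t c x yl f0 hd Hyl ltac:(unfold yl; lra) ltac:(lra)). lra. }
  assert (Hm2 : 0 < m2).
  { unfold m2. pose proof (gap_decr d u1 u1c u1cc u1cx u2 u2c u2cc u2cx HG1 HG2 t c x f0 yr hd ltac:(lra) ltac:(unfold yr; lra) Hyr). lra. }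
  assert (C1 := G_cont d u1 u1c u1cc u1cx HG1).
  assert (C2 := G_cont d u2 u2c u2cc u2cx HG2).
  destruct (C1 t yl x ltac:(split; auto) (m1/2)) as [d1 [Hd1 K1]]. lra.
  destruct (C1 t yr x ltac:(split; auto; unfold yr; lra) (m2/2)) as [d2 [Hd2 K2]]. lra.
  destruct (C2 t (c - yl) x ltac:(split; auto; unfold yl; lra) (m1/2)) as [d3 [Hd3 K3]]. lra.
  destruct (C2 t (c - yr) x ltac:(split; auto; lra) (m2/2)) as [d4 [Hd4 K4]]. lra.
  set (dl := Rmin (Rmin d1 d2) (Rmin (Rmin d3 d4) (c - yr))).
  assert (Hdl : 0 < dl).
  { unfold dl. repeat apply Rmin_glb_lt; lra. }
  exists dl. split. auto. intros c' x' hc' hcc hxx.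
  assert (dl <= d1 /\ dl <= d2 /\ dl <= d3 /\ dl <= d4 /\ dl <= c - yr) as [Q1 [Q2 [Q3 [Q4 Q5]]]].
  { unfold dl. pose proof (Rmin_l (Rmin d1 d2) (Rmin (Rmin d3 d4) (c - yr))).
    pose proof (Rmin_r (Rmin d1 d2) (Rmin (Rmin d3 d4) (c - yr))).
    pose proof (Rmin_l d1 d2). pose proof (Rmin_r d1 d2).
    pose proof (Rmin_l (Rmin d3 d4) (c - yr)). pose proof (Rmin_r (Rmin d3 d4) (c - yr)).
    pose proof (Rmin_l d3 d4). pose proof (Rmin_r d3 d4). lra. }
  assert (hcc' := hcc). apply Rabs_def2 in hcc'.
  assert (Hc' : yr < c') by lra.
  assert (hd' : dom d t c' x') by (split; auto).
  assert (Z0 : Rabs (yl - yl) < d1) by (unfold Rminus; rewrite Rplus_opp_r, Rabs_R0; lra).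
  assert (Z1 : Rabs (yr - yr) < d2) by (unfold Rminus; rewrite Rplus_opp_r, Rabs_R0; lra).
  assert (Z3 : Rabs ((c' - yl) - (c - yl)) < d3) by (replace ((c' - yl) - (c - yl)) with (c' - c) by ring; lra).
  assert (Z4 : Rabs ((c' - yr) - (c - yr)) < d4) by (replace ((c' - yr) - (c - yr)) with (c' - c) by ring; lra).
  assert (A1 := K1 yl x' Hyl Z0 ltac:(intro j; specialize (hxx j); lra)).
  assert (A2 := K2 yr x' ltac:(lra) Z1 ltac:(intro j; specialize (hxx j); lra)).
  assert (A3 := K3 (c' - yl) x' ltac:(lra) Z3 ltac:(intro j; specialize (hxx j); lra)).
  assert (A4 := K4 (c' - yr) x' ltac:(lra) Z4 ltac:(intro j; specialize (hxx j); lra)).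
  apply Rabs_def2 in A1. apply Rabs_def2 in A2. apply Rabs_def2 in A3. apply Rabs_def2 in A4.
  assert (P1 : 0 < gap d u1c u2c t c' x' yl) by (unfold m1, gap in *; lra).
  assert (P2 : gap d u1c u2c t c' x' yr < 0) by (unfold m2, gap in *; lra).
  destruct (Hf t c' x' hd') as [hf' E'].
  assert (g' : gap d u1c u2c t c' x' (f t c' x') = 0) by (unfold gap; lra).
  assert (L : yl < f t c' x').
  { destruct (Rtotal_order yl (f t c' x')) as [|[Eq|Gt]]; auto.
    - rewrite <- Eq in g'. lra.
    - pose proof (gap_decr d u1 u1c u1cc u1cx u2 u2c u2cc u2cx HG1 HG2 t c' x' (f t c' x') yl hd' ltac:(lra) Gt ltac:(lra)). lra. }
  assert (R : f t c' x' < yr).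
  { destruct (Rtotal_order (f t c' x') yr) as [|[Eq|Gt]]; auto.
    - rewrite Eq in g'. lra.
    - pose proof (gap_decr d u1 u1c u1cc u1cx u2 u2c u2cc u2cx HG1 HG2 t c' x' yr (f t c' x') hd' ltac:(lra) Gt ltac:(lra)). lra. }
  apply Rabs_def1; unfold yl, yr in *; lra.
Qed.


Lemma conv_delta_c t c x : dom d t c x ->
  conv R Nh (fun h => f t (c + h) x - f t c x) 0.
Proof.
  intros hd e He. pose proof hd as [ht hc].
  destruct (C_fcont t c x hd e He) as [dl [Hdl K]].
  exists (Rmin dl c). split. apply Rmin_glb_lt; lra.
  intros h [hz hh]. pose proof (Rmin_l dl c). pose proof (Rmin_r dl c).
  rewrite Rminus_0_r. apply K.
  - apply Rabs_def2 in hh. lra.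
  - replace (c + h - c) with h by ring. lra.
  - intro j. unfold Rminus. rewrite Rplus_opp_r, Rabs_R0. auto.
Qed.

Definition ucc0 t c x := u1cc t (f t c x) x * u2cc t (c - f t c x) x /
                         (u1cc t (f t c x) x + u2cc t (c - f t c x) x).

Lemma C_dcc : is_dc d uc0 ucc0.
Proof.
  intros t c x hd. pose proof hd as [ht hc]. destruct (Hf t c x hd) as [hf E0].
  set (f0 := f t c x) in *. set (y0 := c - f0).
  set (Dl := fun h => f t (c + h) x - f0).
  set (A1 := fun h => sl2 u1c t f0 x (Dl h) (u1cc t f0 x)).
  set (A2 := fun h => sl2 u2c t y0 x (h - Dl h) (u2cc t y0 x)).
  assert (hd1 : dom d t f0 x) by (split; auto; lra).
  assert (hd2 : dom d t y0 x) by (split; auto; unfold y0; lra).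
  assert (cD : conv R Nh Dl 0) by (apply conv_delta_c; auto).
  assert (cA1 : conv R Nh A1 (u1cc t f0 x)).
  { apply (sl2_conv d u1c u1cc t f0 x Dl (fun _ => x)); auto.
    exact (G_dcc d u1 u1c u1cc u1cx HG1). exact (G_ccont d u1 u1c u1cc u1cx HG1).
    intros e He. exists 1. split. lra. intros h _ j. unfold Rminus. rewrite Rplus_opp_r, Rabs_R0. auto. }
  assert (cA2 : conv R Nh A2 (u2cc t y0 x)).
  { apply (sl2_conv d u2c u2cc t y0 x (fun h => h - Dl h) (fun _ => x)); auto.
    exact (G_dcc d u2 u2c u2cc u2cx HG2). exact (G_ccont d u2 u2c u2cc u2cx HG2).
    replace 0 with (0 - 0) by ring. apply conv_minus; auto. exact Nh_mono.
    intros e He. exists e. split. auto. intros h [_ hh]. rewrite Rminus_0_r. auto.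
    intros e He. exists 1. split. lra. intros h _ j. unfold Rminus. rewrite Rplus_opp_r, Rabs_R0. auto. }
  assert (n1 : u1cc t f0 x < 0) by (apply (G_neg d u1 u1c u1cc u1cx HG1); auto).
  assert (n2 : u2cc t y0 x < 0) by (apply (G_neg d u2 u2c u2cc u2cx HG2); auto).
  assert (I := ift A1 A2 (fun _ => 0) A2 Dl (u1cc t f0 x) (u2cc t y0 x) 0 (u2cc t y0 x) c
     cA1 cA2 (conv_const R Nh _) cA2 ltac:(lra) hc).
  apply deriv_conv.
  unfold ucc0. fold f0. fold y0.
  replace (u1cc t f0 x * u2cc t y0 x / (u1cc t f0 x + u2cc t y0 x)) with
    ((u1cc t f0 x * u2cc t y0 x + u2cc t y0 x * 0) / (u1cc t f0 x + u2cc t y0 x)) by (field; lra).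
  assert (KEY : forall h, Nh c h -> uc0 t (c + h) x - uc0 t c x = A1 h * Dl h + 0 * h /\
      A1 h * Dl h + 0 * h = - A2 h * Dl h + A2 h * h).
  { intros h [hz hh]. apply Rabs_def2 in hh.
    assert (hdh : dom d t (c + h) x) by (split; auto; lra).
    destruct (Hf t (c + h) x hdh) as [hfh Eh].
    unfold A1, A2. rewrite !sl2_id. unfold uc0, Dl. fold f0.
    replace (f0 + (f t (c + h) x - f0)) with (f t (c + h) x) by ring.
    split. ring.
    replace (- sl2 u2c t y0 x (h - (f t (c + h) x - f0)) (u2cc t y0 x) * (f t (c + h) x - f0) +
             sl2 u2c t y0 x (h - (f t (c + h) x - f0)) (u2cc t y0 x) * h) with
       (sl2 u2c t y0 x (h - (f t (c + h) x - f0)) (u2cc t y0 x) * (h - (f t (c + h) x - f0))) by ring.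
    rewrite sl2_id. unfold y0.
    replace (c - f0 + (h - (f t (c + h) x - f0))) with (c + h - f t (c + h) x) by ring.
    rewrite <- Eh, <- E0. ring. }
  specialize (I (fun h h0 => proj2 (KEY h h0))).
  apply (conv_ext R Nh Nh_mono (fun h => (A1 h * Dl h + 0 * h) / h) _ _ c hc).
  - intros h hh. rewrite (proj1 (KEY h hh)). reflexivity.
  - exact I.
Qed.

Definition ucx0 (i : fintype.ordinal d) t c x :=
  (u1cc t (f t c x) x * u2cx i t (c - f t c x) x + u2cc t (c - f t c x) x * u1cx i t (f t c x) x) /
  (u1cc t (f t c x) x + u2cc t (c - f t c x) x).

Lemma Xh_close (x : vec d) i : forall e, 0 < e -> exists dl, 0 < dl /\
  forall h, Nh dl h -> forall j, Rabs (vupd d x i (x i + h) j - x j) < e.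
Proof.
  intros e He. exists e. split. auto. intros h [_ hh] j.
  destruct (VecL.vupd_cases d x i j (x i + h)) as [[E1 E2]|[E1 E2]]; rewrite E2.
  - subst. replace (x i + h - x i) with h by ring. auto.
  - unfold Rminus. rewrite Rplus_opp_r, Rabs_R0. auto.
Qed.

Lemma C_dx i : is_dx d uc0 i (ucx0 i).
Proof.
  intros t c x hd. pose proof hd as [ht hc]. destruct (Hf t c x hd) as [hf E0].
  set (f0 := f t c x) in *. set (y0 := c - f0).
  set (Xh := fun h => vupd d x i (x i + h)).
  set (Dl := fun h => f t c (Xh h) - f0).
  set (A1 := fun h => sl2 u1c t f0 (Xh h) (Dl h) (u1cc t f0 x)).
  set (A2 := fun h => sl2 u2c t y0 (Xh h) (- Dl h) (u2cc t y0 x)).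
  set (B1 := fun h => (u1c t f0 (Xh h) - u1c t f0 x) / h).
  set (B2 := fun h => (u2c t y0 (Xh h) - u2c t y0 x) / h).
  assert (hd1 : dom d t f0 x) by (split; auto; lra).
  assert (hd2 : dom d t y0 x) by (split; auto; unfold y0; lra).
  assert (cD : conv R Nh Dl 0).
  { intros e He. destruct (C_fcont t c x hd e He) as [dl [Hdl K]].
    destruct (Xh_close x i dl Hdl) as [dl2 [Hdl2 K2]].
    exists dl2. split. auto. intros h hh. rewrite Rminus_0_r. apply K; auto.
    unfold Rminus; rewrite Rplus_opp_r, Rabs_R0; auto. intro j. apply K2. auto. }
  assert (cA1 : conv R Nh A1 (u1cc t f0 x)).
  { apply (sl2_conv d u1c u1cc t f0 x Dl Xh); auto.
    exact (G_dcc d u1 u1c u1cc u1cx HG1). exact (G_ccont d u1 u1c u1cc u1cx HG1).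
    apply Xh_close. }
  assert (cA2 : conv R Nh A2 (u2cc t y0 x)).
  { apply (sl2_conv d u2c u2cc t y0 x (fun h => - Dl h) Xh); auto.
    exact (G_dcc d u2 u2c u2cc u2cx HG2). exact (G_ccont d u2 u2c u2cc u2cx HG2).
    replace 0 with (- 0) by ring. apply conv_opp; auto.
    apply Xh_close. }
  assert (cB1 : conv R Nh B1 (u1cx i t f0 x)).
  { assert (D := G_dx d u1 u1c u1cc u1cx HG1 i t f0 x hd1). apply deriv_conv in D.
    rewrite VecL.vupd_id in D. exact D. }
  assert (cB2 : conv R Nh B2 (u2cx i t y0 x)).
  { assert (D := G_dx d u2 u2c u2cc u2cx HG2 i t y0 x hd2). apply deriv_conv in D.
    rewrite VecL.vupd_id in D. exact D. }
  assert (n1 : u1cc t f0 x < 0) by (apply (G_neg d u1 u1c u1cc u1cx HG1); auto).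
  assert (n2 : u2cc t y0 x < 0) by (apply (G_neg d u2 u2c u2cc u2cx HG2); auto).
  assert (I := ift A1 A2 B1 B2 Dl _ _ _ _ 1 cA1 cA2 cB1 cB2 ltac:(lra) ltac:(lra)).
  assert (KEY : forall h, Nh 1 h -> uc0 t c (Xh h) - uc0 t c x = A1 h * Dl h + B1 h * h /\
      A1 h * Dl h + B1 h * h = - A2 h * Dl h + B2 h * h).
  { intros h [hz hh].
    assert (hdh : dom d t c (Xh h)) by (split; auto).
    destruct (Hf t c (Xh h) hdh) as [hfh Eh].
    assert (EB1 : B1 h * h = u1c t f0 (Xh h) - u1c t f0 x) by (unfold B1; field; auto).
    assert (EB2 : B2 h * h = u2c t y0 (Xh h) - u2c t y0 x) by (unfold B2; field; auto).
    rewrite EB1, EB2.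
    unfold A1, A2. rewrite sl2_id. unfold uc0, Dl. fold f0.
    replace (f0 + (f t c (Xh h) - f0)) with (f t c (Xh h)) by ring.
    split. ring.
    replace (- sl2 u2c t y0 (Xh h) (- (f t c (Xh h) - f0)) (u2cc t y0 x) * (f t c (Xh h) - f0))
      with (sl2 u2c t y0 (Xh h) (- (f t c (Xh h) - f0)) (u2cc t y0 x) * (- (f t c (Xh h) - f0))) by ring.
    rewrite sl2_id. unfold y0.
    replace (c - f0 + - (f t c (Xh h) - f0)) with (c - f t c (Xh h)) by ring.
    rewrite <- Eh. rewrite <- E0. ring. }
  specialize (I (fun h h0 => proj2 (KEY h h0))).
  apply deriv_conv. unfold ucx0. fold f0. fold y0.
  apply (conv_ext R Nh Nh_mono (fun h => (A1 h * Dl h + B1 h * h) / h) _ _ 1 ltac:(lra)).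
  - intros h hh. rewrite VecL.vupd_id. change (vupd d x i (x i + h)) with (Xh h). rewrite <- (proj1 (KEY h hh)). reflexivity.
  - exact I.
Qed.


Lemma f_pos t c x : dom d t c x -> 0 < f t c x.
Proof. intros hd. destruct (Hf t c x hd) as [[h _] _]. auto. Qed.

Lemma cf_pos t c x : dom d t c x -> 0 < c - f t c x.
Proof. intros hd. destruct (Hf t c x hd) as [[_ h] _]. lra. Qed.

Lemma C_cf : cont_cx d (fun t c x => c - f t c x).
Proof.
  apply conv_cc. intros t c x hd. apply conv_minus. apply Ncx_mono.
  apply cc_fst. apply (cc_conv d f). apply C_fcont. auto.
Qed.

Lemma C_ucont : cont_cx d uc0.
Proof.
  unfold uc0. apply (comp_cont d u1c f). exact (G_cont d u1 u1c u1cc u1cx HG1). apply C_fcont. apply f_pos.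
Qed.

Lemma C_a1 : cont_cx d (fun t c x => u1cc t (f t c x) x).
Proof. apply (comp_cont d u1cc f). exact (G_ccont d u1 u1c u1cc u1cx HG1). apply C_fcont. apply f_pos. Qed.

Lemma C_a2 : cont_cx d (fun t c x => u2cc t (c - f t c x) x).
Proof. apply (comp_cont d u2cc (fun t c x => c - f t c x)). exact (G_ccont d u2 u2c u2cc u2cx HG2). apply C_cf. apply cf_pos. Qed.

Lemma C_b1 i : cont_cx d (fun t c x => u1cx i t (f t c x) x).
Proof. apply (comp_cont d (u1cx i) f). exact (G_xcont d u1 u1c u1cc u1cx HG1 i). apply C_fcont. apply f_pos. Qed.

Lemma C_b2 i : cont_cx d (fun t c x => u2cx i t (c - f t c x) x).
Proof. apply (comp_cont d (u2cx i) (fun t c x => c - f t c x)). exact (G_xcont d u2 u2c u2cc u2cx HG2 i). apply C_cf. apply cf_pos. Qed.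

Lemma sum_neg t c x : dom d t c x -> u1cc t (f t c x) x + u2cc t (c - f t c x) x < 0.
Proof.
  intros hd. pose proof hd as [ht hc].
  assert (u1cc t (f t c x) x < 0) by (apply (G_neg d u1 u1c u1cc u1cx HG1); split; auto; apply f_pos; auto).
  assert (u2cc t (c - f t c x) x < 0) by (apply (G_neg d u2 u2c u2cc u2cx HG2); split; auto; apply cf_pos; auto).
  lra.
Qed.

Lemma C_ucccont : cont_cx d ucc0.
Proof.
  apply conv_cc. intros t c x hd. unfold ucc0.
  pose proof (Ncx_mono d c x) as NM.
  apply conv_div; auto. apply conv_mult; auto.
  apply (cc_conv d _ t c x C_a1 hd). apply (cc_conv d _ t c x C_a2 hd).
  apply conv_plus; auto. apply (cc_conv d _ t c x C_a1 hd). apply (cc_conv d _ t c x C_a2 hd).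
  pose proof (sum_neg t c x hd). lra.
Qed.

Lemma C_ucxcont i : cont_cx d (ucx0 i).
Proof.
  apply conv_cc. intros t c x hd. unfold ucx0.
  pose proof (Ncx_mono d c x) as NM.
  apply conv_div; auto. apply conv_plus; auto; apply conv_mult; auto.
  apply (cc_conv d _ t c x C_a1 hd). apply (cc_conv d _ t c x (C_b2 i) hd).
  apply (cc_conv d _ t c x C_a2 hd). apply (cc_conv d _ t c x (C_b1 i) hd).
  apply conv_plus; auto. apply (cc_conv d _ t c x C_a1 hd). apply (cc_conv d _ t c x C_a2 hd).
  pose proof (sum_neg t c x hd). lra.
Qed.

Lemma C_neg t c x : dom d t c x -> ucc0 t c x < 0.
Proof.
  intros hd. pose proof hd as [ht hc]. unfold ucc0.
  assert (u1cc t (f t c x) x < 0) by (apply (G_neg d u1 u1c u1cc u1cx HG1); split; auto; apply f_pos; auto).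
  assert (u2cc t (c - f t c x) x < 0) by (apply (G_neg d u2 u2c u2cc u2cx HG2); split; auto; apply cf_pos; auto).
  assert (0 < u1cc t (f t c x) x * u2cc t (c - f t c x) x) by nra.
  unfold Rdiv. apply Rmult_pos_neg. auto. apply Rinv_neg. lra.
Qed.

Lemma C_bound : exists N, 0 < N /\
  forall t c x i, dom d t c x ->
    - c * ucc0 t c x / uc0 t c x + Rabs (ucx0 i t c x) / uc0 t c x <= N.
Proof.
  destruct (G_bound d u1 u1c u1cc u1cx HG1) as [N1 [HN1 K1]].
  destruct (G_bound d u2 u2c u2cc u2cx HG2) as [N2 [HN2 K2]].
  exists (2 * (N1 + N2)). split. lra.
  intros t c x i hd. pose proof hd as [ht hc]. destruct (Hf t c x hd) as [hf E].
  assert (hd1 : dom d t (f t c x) x) by (split; auto; lra).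
  assert (hd2 : dom d t (c - f t c x) x) by (split; auto; lra).
  specialize (K1 t (f t c x) x i hd1). specialize (K2 t (c - f t c x) x i hd2).
  rewrite <- E in K2.
  unfold ucc0, ucx0, uc0.
  apply (bound_alg c (f t c x) _ _ _ (u1cx i t (f t c x) x) (u2cx i t (c - f t c x) x) N1 N2); auto.
  apply (G_neg d u1 u1c u1cc u1cx HG1); auto.
  apply (G_neg d u2 u2c u2cc u2cx HG2); auto.
  apply (G_pos d u1 u1c u1cc u1cx HU1 HG1); auto.
Qed.

Lemma C_inada t x : 0 <= t <= 1 -> Inada (fun c => u t c x).
Proof.
  intros ht. split; [|split].
  - intros a b l ha hb hab hl. apply C_conc; auto.
  - intros a b ha hab. apply C_incr; auto.
  - exists (fun c => uc0 t c x). split; [|split; [|split]].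
    + intros c hc. apply C_dc. split; auto.
    + intros c hc. apply epsdelta_cont. intros e He.
      destruct (C_ucont t c x ltac:(split; auto) e He) as [dl [Hdl K]].
      exists (Rmin dl c). split. apply Rmin_glb_lt; lra.
      intros z hz. pose proof (Rmin_l dl c). pose proof (Rmin_r dl c).
      apply K. apply Rabs_def2 in hz. lra. lra. intro j. unfold Rminus. rewrite Rplus_opp_r, Rabs_R0. auto.
    + intros M. destruct (G_lim0 d u1 u1c u1cc u1cx HU1 HG1 t x ht M) as [e [He K]].
      exists e. split. auto. intros c hc. unfold uc0.
      destruct (Hf t c x ltac:(split; auto; lra)) as [hf _]. apply K. lra.
    + intros e He.
      destruct (G_liminf d u1 u1c u1cc u1cx HU1 HG1 t x ht e He) as [M1 K1].
      destruct (G_liminf d u2 u2c u2cc u2cx HU2 HG2 t x ht e He) as [M2 K2].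
      exists (2 * (Rabs M1 + Rabs M2) + 1). intros c hc.
      pose proof (Rabs_pos M1). pose proof (Rabs_pos M2).
      pose proof (Rle_abs M1). pose proof (Rle_abs M2).
      assert (hd : dom d t c x) by (split; auto; lra).
      destruct (Hf t c x hd) as [hf E].
      assert (0 < uc0 t c x).
      { unfold uc0. apply (G_pos d u1 u1c u1cc u1cx HU1 HG1). split; auto; lra. }
      rewrite Rabs_right by lra. unfold uc0.
      destruct (Rle_or_lt (c / 2) (f t c x)).
      * apply K1; lra.
      * rewrite E. apply K2; lra.
Qed.

Lemma C_le_sum t c x : dom d t c x -> u t c x <= u1 t c x + u2 t c x.
Proof.
  intros hd. pose proof hd as [ht hc]. destruct (Hf t c x hd) as [hf _].
  rewrite C_val by auto.
  assert (u1 t (f t c x) x < u1 t c x) by (apply (G_incr d u1 HU1); auto; lra).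
  assert (u2 t (c - f t c x) x < u2 t c x) by (apply (G_incr d u2 HU2); auto; lra).
  lra.
Qed.


Lemma Rabs_le_inv' x a : Rabs x <= a -> - a <= x <= a.
Proof. unfold Rabs. destruct Rcase_abs; lra. Qed.

Lemma exp_le x y : x <= y -> exp x <= exp y.
Proof. intros h. destruct (Rle_lt_or_eq_dec _ _ h). left. apply exp_increasing. auto. subst. lra. Qed.

Lemma C_growth : exists N, 0 < N /\ forall t x y, 0 <= t <= 1 ->
  Rabs (u t (exp y) x) <= exp (N * (1 + vnorm d x + Rabs y)).
Proof.
  destruct HU1 as [_ [_ [N1 [HN1 K1]]]]. destruct HU2 as [_ [_ [N2 [HN2 K2]]]].
  exists (2 * (N1 + N2) + 1). split. lra. intros t x y ht.
  set (K := 1 + vnorm d x + Rabs y).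
  assert (Hv : 0 <= vnorm d x) by (unfold vnorm; apply sqrt_pos).
  assert (HK : 1 <= K) by (unfold K; pose proof (Rabs_pos y); lra).
  assert (e1 : 2 < exp 1) by (pose proof (exp_ineq1 1 ltac:(lra)); lra).
  assert (l0 : 0 < ln 2) by (pose proof ln_lt_2; lra).
  assert (l1 : ln 2 < 1) by (rewrite <- (ln_exp 1); apply ln_increasing; lra).
  assert (Ec : exp (y - ln 2) = exp y / 2).
  { unfold Rminus. rewrite exp_plus, exp_Ropp, exp_ln by lra. field. }
  assert (hc : 0 < exp y) by apply exp_pos.
  assert (hd : dom d t (exp y) x) by (split; auto).
  assert (Ky : 1 + vnorm d x + Rabs (y - ln 2) <= 2 * K).
  { unfold K. pose proof (Rabs_triang y (- ln 2)). rewrite Rabs_Ropp, (Rabs_right (ln 2)) in H by lra.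
    pose proof (Rabs_pos y). unfold Rminus. lra. }
  assert (A1 := K1 t x y ht). assert (A2 := K2 t x y ht).
  assert (B1 := K1 t x (y - ln 2) ht). assert (B2 := K2 t x (y - ln 2) ht).
  rewrite Ec in B1, B2. fold K in A1, A2.
  assert (A1' : Rabs (u1 t (exp y) x) <= exp (2 * N1 * K)) by (eapply Rle_trans; [exact A1| apply exp_le; nra]).
  assert (A2' : Rabs (u2 t (exp y) x) <= exp (2 * N2 * K)) by (eapply Rle_trans; [exact A2| apply exp_le; nra]).
  assert (B1' : Rabs (u1 t (exp y / 2) x) <= exp (2 * N1 * K)) by (eapply Rle_trans; [exact B1| apply exp_le; nra]).
  assert (B2' : Rabs (u2 t (exp y / 2) x) <= exp (2 * N2 * K)) by (eapply Rle_trans; [exact B2| apply exp_le; nra]).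
  assert (U : u t (exp y) x <= u1 t (exp y) x + u2 t (exp y) x) by (apply C_le_sum; auto).
  assert (L : u1 t (exp y / 2) x + u2 t (exp y - exp y / 2) x <= u t (exp y) x) by (apply C_ge; auto; lra).
  replace (exp y - exp y / 2) with (exp y / 2) in L by field.
  apply Rabs_le_inv' in A1'. apply Rabs_le_inv' in A2'. apply Rabs_le_inv' in B1'. apply Rabs_le_inv' in B2'.
  assert (S1 : exp (2 * N1 * K) <= exp (2 * (N1 + N2) * K)) by (apply exp_le; nra).
  assert (S2 : exp (2 * N2 * K) <= exp (2 * (N1 + N2) * K)) by (apply exp_le; nra).
  assert (S3 : 2 * exp (2 * (N1 + N2) * K) <= exp ((2 * (N1 + N2) + 1) * K)).
  { apply Rle_trans with (exp 1 * exp (2 * (N1 + N2) * K)).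
    apply Rmult_le_compat_r. left; apply exp_pos. lra.
    rewrite <- exp_plus. apply exp_le. nra. }
  apply Rabs_le. lra.
Qed.

Lemma C_all : U1 d u /\ GoodD d u uc0 ucc0 ucx0.
Proof.
  split.
  - split; [|split].
    + apply (meas_supconv d u1 u2 u HU1 HU2 HS).
    + apply C_inada.
    + apply C_growth.
  - unfold GoodD. split; [|split; [|split; [|split; [|split; [|split]]]]].
    + apply C_dc.
    + apply C_dcc.
    + apply C_dx.
    + apply C_ucccont.
    + apply C_ucxcont.
    + apply C_neg.
    + apply C_bound.
Qed.

End Core.

Lemma GoodD_transfer d (u uc ucc : fun3 d) ucx (uc' ucc' : fun3 d) ucx' :
  GoodD d u uc ucc ucx -> is_dc d u uc' -> is_dc d uc' ucc' -> (forall i, is_dx d uc' i (ucx' i)) ->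
  GoodD d u uc' ucc' ucx' /\
  (forall t c x, dom d t c x -> uc' t c x = uc t c x) /\
  (forall t c x, dom d t c x -> ucc' t c x = ucc t c x) /\
  (forall t c x i, dom d t c x -> ucx' i t c x = ucx i t c x).
Proof.
  intros HG h1 h2 h3.
  assert (A1 : forall t c x, dom d t c x -> uc' t c x = uc t c x).
  { intros t c x hd. apply (uniqueness_limite (fun c => u t c x) c). apply h1; auto.
    apply (G_dc d u uc ucc ucx HG); auto. }
  assert (A2 : forall t c x, dom d t c x -> ucc' t c x = ucc t c x).
  { intros t c x hd. pose proof hd as [ht hc]. apply (uniqueness_limite (fun c => uc' t c x) c). apply h2; auto.
    apply (deriv_local (fun c => uc t c x)); auto.
    intros y hy. symmetry. apply A1. split; auto.
    apply (G_dcc d u uc ucc ucx HG); auto. }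
  assert (A3 : forall t c x i, dom d t c x -> ucx' i t c x = ucx i t c x).
  { intros t c x i hd. pose proof hd as [ht hc].
    apply (uniqueness_limite (fun h => uc' t c (vupd d x i h)) (x i)). apply h3; auto.
    apply (deriv_ext (fun h => uc t c (vupd d x i h))).
    intros y. symmetry. apply A1. split; auto.
    apply (G_dx d u uc ucc ucx HG); auto. }
  split; [|split; [exact A1|split; [exact A2|exact A3]]].
  unfold GoodD. split; [|split; [|split; [|split; [|split; [|split]]]]]; auto.
  - intros t c x hd e He. destruct (G_ccont d u uc ucc ucx HG t c x hd e He) as [dl [Hdl K]].
    exists dl. split; auto. intros c' x' hc' h4 h5. pose proof hd as [ht hc].
    rewrite (A2 t c' x'), (A2 t c x); auto. split; auto.
  - intros i t c x hd e He. destruct (G_xcont d u uc ucc ucx HG i t c x hd e He) as [dl [Hdl K]].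
    exists dl. split; auto. intros c' x' hc' h4 h5. pose proof hd as [ht hc].
    rewrite (A3 t c' x'), (A3 t c x); auto. split; auto.
  - intros t c x hd. rewrite A2; auto. apply (G_neg d u uc ucc ucx HG); auto.
  - destruct (G_bound d u uc ucc ucx HG) as [N [HN K]]. exists N. split; auto.
    intros t c x i hd. rewrite A1, A2, A3; auto.
Qed.

Lemma lemma5_aux (d : nat) (u1 u2 u : fun3 d) :
  U2 d u1 -> U2 d u2 -> is_supconv d u1 u2 u ->
  U2 d u /\
  forall (u1c u1cc u2c u2cc uc ucc : fun3 d)
         (u1cx u2cx ucx : fintype.ordinal d -> fun3 d) (f : fun3 d),
    is_dc d u1 u1c -> is_dc d u1c u1cc -> (forall i, is_dx d u1c i (u1cx i)) ->
    is_dc d u2 u2c -> is_dc d u2c u2cc -> (forall i, is_dx d u2c i (u2cx i)) ->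
    is_dc d u uc -> is_dc d uc ucc -> (forall i, is_dx d uc i (ucx i)) ->
    (forall t c x, dom d t c x ->
       0 < f t c x < c /\ u1c t (f t c x) x = u2c t (c - f t c x) x) ->
    forall t c x, dom d t c x ->
      uc t c x = u1c t (f t c x) x /\
      uc t c x / ucc t c x =
        u1c t (f t c x) x / u1cc t (f t c x) x
        + u2c t (c - f t c x) x / u2cc t (c - f t c x) x /\
      (forall i : fintype.ordinal d,
        ucx i t c x / ucc t c x =
          u1cx i t (f t c x) x / u1cc t (f t c x) x
          + u2cx i t (c - f t c x) x / u2cc t (c - f t c x) x).
Proof.
  intros H1 H2 HS. apply U2_iff in H1. apply U2_iff in H2.
  destruct H1 as [HU1 [w1c [w1cc [w1cx HG1]]]].
  destruct H2 as [HU2 [w2c [w2cc [w2cx HG2]]]].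
  split.
  - set (F := fun t c x => epsilon (inhabits 0) (fun y => 0 < y < c /\ gap d w1c w2c t c x y = 0)).
    assert (HF : forall t c x, dom d t c x -> 0 < F t c x < c /\ w1c t (F t c x) x = w2c t (c - F t c x) x).
    { intros t c x hd.
      assert (E := epsilon_spec (inhabits 0) (fun y => 0 < y < c /\ gap d w1c w2c t c x y = 0)
                      (f_exists d u1 w1c w1cc w1cx u2 w2c w2cc w2cx HU1 HG1 HU2 HG2 t c x hd)).
      fold (F t c x) in E. destruct E as [E1 E2]. unfold gap in E2. split; auto. lra. }
    destruct (C_all d u1 w1c w1cc w1cx u2 w2c w2cc w2cx u F HU1 HG1 HU2 HG2 HS HF) as [A B].
    apply U2_iff. split; auto. eexists; eexists; eexists. exact B.
  - intros u1c u1cc u2c u2cc uc ucc u1cx u2cx ucx f h1 h2 h3 h4 h5 h6 h7 h8 h9 hf t c x hd.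
    destruct (GoodD_transfer d u1 w1c w1cc w1cx u1c u1cc u1cx HG1 h1 h2 h3) as [G1 _].
    destruct (GoodD_transfer d u2 w2c w2cc w2cx u2c u2cc u2cx HG2 h4 h5 h6) as [G2 _].
    destruct (C_all d u1 u1c u1cc u1cx u2 u2c u2cc u2cx u f HU1 G1 HU2 G2 HS hf) as [_ Gu].
    destruct (GoodD_transfer d u _ _ _ uc ucc ucx Gu h7 h8 h9) as [_ [Au1 [Au2 Au3]]].
    pose proof hd as [ht hc]. destruct (hf t c x hd) as [hft E].
    assert (n1 : u1cc t (f t c x) x < 0) by (apply (G_neg d u1 u1c u1cc u1cx G1); split; auto; lra).
    assert (n2 : u2cc t (c - f t c x) x < 0) by (apply (G_neg d u2 u2c u2cc u2cx G2); split; auto; lra).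
    rewrite (Au1 t c x hd), (Au2 t c x hd). unfold uc0, ucc0.
    split; [reflexivity|split].
    + rewrite <- E. field. repeat split; lra.
    + intro i. rewrite (Au3 t c x i hd). unfold ucx0. field. repeat split; lra.
Qed.

From mathcomp Require Import ssreflect ssrbool eqtype ssrnat seq fintype.
Open Scope R_scope.

Theorem lemma5 (d : nat) (u1 u2 u : fun3 d) :
  U2 d u1 -> U2 d u2 -> is_supconv d u1 u2 u ->
  U2 d u /\
  forall (u1c u1cc u2c u2cc uc ucc : fun3 d)
         (u1cx u2cx ucx : 'I_d -> fun3 d) (f : fun3 d),
    is_dc d u1 u1c -> is_dc d u1c u1cc -> (forall i, is_dx d u1c i (u1cx i)) ->
    is_dc d u2 u2c -> is_dc d u2c u2cc -> (forall i, is_dx d u2c i (u2cx i)) ->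
    is_dc d u uc -> is_dc d uc ucc -> (forall i, is_dx d uc i (ucx i)) ->
    (forall t c x, dom d t c x ->
       0 < f t c x < c /\ u1c t (f t c x) x = u2c t (c - f t c x) x) ->
    forall t c x, dom d t c x ->
      uc t c x = u1c t (f t c x) x /\
      uc t c x / ucc t c x =
        u1c t (f t c x) x / u1cc t (f t c x) x
        + u2c t (c - f t c x) x / u2cc t (c - f t c x) x /\
      (forall i : 'I_d,
        ucx i t c x / ucc t c x =
          u1cx i t (f t c x) x / u1cc t (f t c x) x
          + u2cx i t (c - f t c x) x / u2cc t (c - f t c x) x).
Proof. exact (lemma5_aux d u1 u2 u). Qed.
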